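(* Suppose $X$ is transfinitely $\pi_1$-commutative at $x\in X$. Then $X$ has well-defined infinite $\pi_1$-products at $x$ if and only if $X$ has well-defined transfinite $\pi_1$-products at $x$. Moreover, if $X$ is first countable at $x$, these conditions are also equivalent to $X$ being homotopically Hausdorff at $x$.
   Context: Let $\mathbb{H}=\bigcup_nC_n$ be the Hawaiian earring ($C_n\subset\mathbb{R}^2$ the circle of radius $1/n$ centered at $(1/n,0)$, basepoint $b_0=(0,0)$), $\ell_n$ the counterclockwise loop on $C_n$. A sequence of loops $\alpha_n\in\Omega(X,x)$ is a null-sequence if every neighborhood of $x$ contains all but finitely many $\mathrm{Im}(\alpha_n)$; then there is a unique map $f:(\mathbb{H},b_0)\to(X,x)$ with $f\circ\ell_n=\alpha_n$. $\ell_\infty$ is the loop equal to $\ell_n$ on $[\frac{n-1}{n},\frac{n}{n+1}]$ with $\ell_\infty(1)=b_0$; with $\mathcal{C}\subseteq[0,1]$ the middle-thirds Cantor set and $[0,1]\setminus\mathcal{C}=\bigcup_{n\ge1}\bigcup_{k=1}^{2^{n-1}}I_n^k$ (open intervals of length $3^{-n}$, left to right for fixed $n$), $\ell_\tau$ is the loop with $\ell_\tau(\mathcal{C})=b_0$ equal to $\ell_{2^{n-1}+k-1}$ on $\overline{I_n^k}$. Set $\prod_{n=1}^\infty\alpha_n:=f\circ\ell_\infty$ and $\prod_\tau\alpha_n:=f\circ\ell_\tau$. $X$ is transfinitely $\pi_1$-commutative at $x$ if $[\prod_\tau\alpha_n]=[\prod_\tau\alpha_{\phi(n)}]$ for every null-sequence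 and bijection $\phi:\mathbb{N}\to\mathbb{N}$. $X$ has well-defined infinite (resp. transfinite) $\pi_1$-products at $x$ if for all null-sequences $\alpha_n,\beta_n\in\Omega(X,x)$ with $\alpha_n\simeq\beta_n$ (path-homotopic) for all $n$, we have $\prod_{n=1}^\infty\alpha_n\simeq\prod_{n=1}^\infty\beta_n$ (resp. $\prod_\tau\alpha_n\simeq\prod_\tau\beta_n$). $X$ is homotopically Hausdorff at $x$ if for every nontrivial $[\alpha]\in\pi_1(X,x)$ there is a neighborhood $U$ of $x$ such that no loop in $U$ based at $x$ represents $[\alpha]$. *)

(* Defs.v *)
From Stdlib Require Import Reals Lra Lia Arith.
Open Scope R_scope.

Record TopSpace := {
  pt :> Type;
  is_open : (pt -> Prop) -> Prop;
  open_full : is_open (fun _ => True);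
  open_inter : forall U V, is_open U -> is_open V -> is_open (fun z => U z /\ V z);
  open_union : forall (F : (pt -> Prop) -> Prop),
      (forall U, F U -> is_open U) -> is_open (fun z => exists U, F U /\ U z)
}.

(** Paths are represented as functions [R -> X]; only their values on
    [0,1] matter.  [I01 t] means [t] lies in the unit interval. *)
Definition I01 (t : R) : Prop := 0 <= t <= 1.

Definition cont01 {X : TopSpace} (f : R -> X) : Prop :=
  forall U, is_open X U -> forall t, I01 t -> U (f t) ->
    exists eps, eps > 0 /\ forall s, I01 s -> Rabs (s - t) < eps -> U (f s).

Definition cont01sq {X : TopSpace} (H : R -> R -> X) : Prop :=
  forall U, is_open X U -> forall s t, I01 s -> I01 t -> U (H s t) ->
    exists eps, eps > 0 /\ forall s' t', I01 s' -> I01 t' ->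
      Rabs (s' - s) < eps -> Rabs (t' - t) < eps -> U (H s' t').

Definition is_loop {X : TopSpace} (x : X) (a : R -> X) : Prop :=
  cont01 a /\ a 0 = x /\ a 1 = x.

Definition phtpy {X : TopSpace} (a b : R -> X) : Prop :=
  exists H : R -> R -> X, cont01sq H /\
    (forall t, I01 t -> H 0 t = a t) /\
    (forall t, I01 t -> H 1 t = b t) /\
    (forall s, I01 s -> H s 0 = a 0 /\ H s 1 = a 1).

(** null-sequences (0-based indexing: a 0 is the paper's alpha_1) *)
Definition null_seq {X : TopSpace} (x : X) (a : nat -> R -> X) : Prop :=
  (forall n, is_loop x (a n)) /\
  forall U, is_open X U -> U x ->
    exists N, forall n, (N <= n)%nat -> forall t, I01 t -> U (a n t).

(** [p] is (a representative on [0,1] of) f o l_infty, i.e. prod_{n>=1} alpha_n: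
    on [k/(k+1), (k+1)/(k+2)] it is a_k linearly reparametrized, and p 1 = x *)
Definition IsInfProd {X : TopSpace} (x : X) (a : nat -> R -> X) (p : R -> X) : Prop :=
  (forall (k : nat) t,
      INR k / INR (k + 1) <= t <= INR (k + 1) / INR (k + 2) ->
      p t = a k ((t - INR k / INR (k + 1)) * INR (k + 1) * INR (k + 2)))
  /\ p 1 = x.

(** [tern n m] : the n low binary digits of m, read in base 3 *)
Fixpoint tern (n m : nat) : nat :=
  match n with
  | O => O
  | S n' => ((if Nat.odd m then 1 else 0) + 3 * tern n' (Nat.div2 m))%nat
  end.

(** Endpoints of the middle-thirds complementary interval I_{n+1}^{k+1}
    (0-based n and k, k < 2^n), numbered left to right:
    I = ((3a+1)/3^(n+1), (3a+2)/3^(n+1)) with a = 2 * tern n k. *)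
Definition Ileft (n k : nat) : R := INR (3 * (2 * tern n k) + 1) / 3 ^ (n + 1).
Definition Iright (n k : nat) : R := INR (3 * (2 * tern n k) + 2) / 3 ^ (n + 1).

(** [p] is (a representative on [0,1] of) f o l_tau, i.e. prod_tau alpha_n:
    on closure(I_{n}^{k}) it is alpha_{2^(n-1)+k-1} (paper, 1-based) linearly
    reparametrized, and it is x on the Cantor set. *)
Definition IsTauProd {X : TopSpace} (x : X) (a : nat -> R -> X) (p : R -> X) : Prop :=
  (forall (n k : nat) t, (k < 2 ^ n)%nat ->
      Ileft n k <= t <= Iright n k ->
      p t = a (2 ^ n + k - 1)%nat ((t - Ileft n k) * 3 ^ (n + 1)))
  /\ (forall t, I01 t ->
      (forall (n k : nat), (k < 2 ^ n)%nat -> ~ (Ileft n k < t < Iright n k)) ->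
      p t = x).

Definition bijective_nat (phi : nat -> nat) : Prop :=
  (forall m n, phi m = phi n -> m = n) /\ (forall m, exists n, phi n = m).

Definition transf_pi1_comm {X : TopSpace} (x : X) : Prop :=
  forall a phi, null_seq x a -> bijective_nat phi ->
    forall p q, IsTauProd x a p -> IsTauProd x (fun n => a (phi n)) q -> phtpy p q.

Definition wd_inf_products {X : TopSpace} (x : X) : Prop :=
  forall a b, null_seq x a -> null_seq x b -> (forall n, phtpy (a n) (b n)) ->
    forall p q, IsInfProd x a p -> IsInfProd x b q -> phtpy p q.

Definition wd_transf_products {X : TopSpace} (x : X) : Prop :=
  forall a b, null_seq x a -> null_seq x b -> (forall n, phtpy (a n) (b n)) ->
    forall p q, IsTauProd x a p -> IsTauProd x b q -> phtpy p q.

Definition const_path {X : TopSpace} (x : X) : R -> X := fun _ => x.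

Definition homotopically_hausdorff {X : TopSpace} (x : X) : Prop :=
  forall a, is_loop x a -> ~ phtpy a (const_path x) ->
    exists U, is_open X U /\ U x /\
      forall b, is_loop x b -> (forall t, I01 t -> U (b t)) -> ~ phtpy b a.

Definition first_countable_at {X : TopSpace} (x : X) : Prop :=
  exists B : nat -> X -> Prop,
    (forall n, is_open X (B n) /\ B n x) /\
    (forall U, is_open X U -> U x -> exists n, forall z, B n z -> U z).

(* Main.v *)
Require Import Defs.
From Stdlib Require Import Reals Lra Lia Arith ZArith ClassicalEpsilon Classical FunctionalExtensionality.
Open Scope R_scope.

Definition cont1 (f : R -> R) : Prop :=
  forall t, I01 t -> forall e, e > 0 -> exists d, d > 0 /\
    forall t', I01 t' -> Rabs (t' - t) < d -> Rabs (f t' - f t) < e.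

Definition cont2 (f : R -> R -> R) : Prop :=
  forall s t, I01 s -> I01 t -> forall e, e > 0 -> exists d, d > 0 /\
    forall s' t', I01 s' -> I01 t' -> Rabs (s' - s) < d -> Rabs (t' - t) < d ->
      Rabs (f s' t' - f s t) < e.

Definition into01 (f : R -> R) : Prop := forall t, I01 t -> I01 (f t).

Lemma Rmin_lt_l a b c : a < Rmin b c -> a < b.
Proof. intros; eapply Rlt_le_trans; [exact H| apply Rmin_l]. Qed.
Lemma Rmin_lt_r a b c : a < Rmin b c -> a < c.
Proof. intros; eapply Rlt_le_trans; [exact H| apply Rmin_r]. Qed.

Lemma Rdiv_le_0_compat a b : 0 <= a -> 0 < b -> 0 <= a / b.
Proof. intros; unfold Rdiv; apply Rmult_le_pos; [auto| left; apply Rinv_0_lt_compat; auto]. Qed.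

Lemma I01_0 : I01 0. Proof. unfold I01; lra. Qed.
Lemma I01_1 : I01 1. Proof. unfold I01; lra. Qed.
#[global] Hint Resolve I01_0 I01_1 : core.

Lemma cont1_id : cont1 (fun t => t).
Proof. intros t _ e He; exists e; split; auto. Qed.

Lemma cont1_const c : cont1 (fun _ => c).
Proof. intros t _ e He; exists 1; split; [lra|]. intros; rewrite Rminus_diag, Rabs_R0; lra. Qed.

Lemma cont1_lin a b : cont1 (fun t => a * t + b).
Proof.
  intros t _ e He. exists (e / (Rabs a + 1)). split.
  { apply Rdiv_lt_0_compat; [lra| pose proof (Rabs_pos a); lra]. }
  intros t' _ Ht.
  replace (a * t' + b - (a * t + b)) with (a * (t' - t)) by ring.
  rewrite Rabs_mult. pose proof (Rabs_pos a). pose proof (Rabs_pos (t'-t)).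
  apply Rle_lt_trans with ((Rabs a + 1) * Rabs (t' - t)). nra.
  apply Rlt_le_trans with ((Rabs a + 1) * (e / (Rabs a + 1))).
  apply Rmult_lt_compat_l; lra. right; field; lra.
Qed.

Definition clamp (u : R) : R := Rmax 0 (Rmin 1 u).

Lemma clamp_lip u v : Rabs (clamp u - clamp v) <= Rabs (u - v).
Proof.
  unfold clamp, Rmax, Rmin.
  repeat (destruct Rle_dec); unfold Rabs; repeat destruct Rcase_abs; lra.
Qed.

Lemma clamp_I01 u : I01 (clamp u).
Proof. unfold clamp, I01, Rmax, Rmin. repeat destruct Rle_dec; lra. Qed.

Lemma clamp_id u : I01 u -> clamp u = u.
Proof. unfold clamp, I01, Rmax, Rmin; intros. repeat destruct Rle_dec; lra. Qed.
Lemma clamp_le0 u : u <= 0 -> clamp u = 0.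
Proof. unfold clamp, Rmax, Rmin; intros. repeat destruct Rle_dec; lra. Qed.
Lemma clamp_ge1 u : 1 <= u -> clamp u = 1.
Proof. unfold clamp, Rmax, Rmin; intros. repeat destruct Rle_dec; lra. Qed.

Lemma cont1_clamp_lin a b : cont1 (fun t => clamp (a * t + b)).
Proof.
  intros t Ht e He. destruct (cont1_lin a b t Ht e He) as [d [Hd H]].
  exists d; split; auto. intros t' Ht' Hd'.
  eapply Rle_lt_trans; [apply clamp_lip| apply H; auto].
Qed.

Lemma cont1_plus f g : cont1 f -> cont1 g -> cont1 (fun t => f t + g t).
Proof.
  intros Hf Hg t Ht e He.
  destruct (Hf t Ht (e/2)) as [d1 [Hd1 H1]]; [lra|].
  destruct (Hg t Ht (e/2)) as [d2 [Hd2 H2]]; [lra|].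
  exists (Rmin d1 d2); split; [apply Rmin_glb_lt; auto|].
  intros t' Ht' Hd.
  replace (f t' + g t' - (f t + g t)) with ((f t' - f t) + (g t' - g t)) by ring.
  eapply Rle_lt_trans; [apply Rabs_triang|].
  assert (Rabs (t'-t) < d1) by (eapply Rmin_lt_l; eassumption).
  assert (Rabs (t'-t) < d2) by (eapply Rmin_lt_r; eassumption).
  specialize (H1 t' Ht' H). specialize (H2 t' Ht' H0). lra.
Qed.

Lemma cont1_scal c f : cont1 f -> cont1 (fun t => c * f t).
Proof.
  intros Hf t Ht e He.
  destruct (Hf t Ht (e / (Rabs c + 1))) as [d [Hd H]].
  { apply Rdiv_lt_0_compat; [lra| pose proof (Rabs_pos c); lra]. }
  exists d; split; auto. intros t' Ht' Hd'.
  replace (c * f t' - c * f t) with (c * (f t' - f t)) by ring.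
  rewrite Rabs_mult. specialize (H t' Ht' Hd').
  pose proof (Rabs_pos c). pose proof (Rabs_pos (f t' - f t)).
  apply Rle_lt_trans with ((Rabs c + 1) * Rabs (f t' - f t)). nra.
  apply Rlt_le_trans with ((Rabs c + 1) * (e / (Rabs c + 1))).
  apply Rmult_lt_compat_l; lra. right; field; lra.
Qed.

Lemma cont1_comp f g : cont1 f -> cont1 g -> into01 g -> cont1 (fun t => f (g t)).
Proof.
  intros Hf Hg Hi t Ht e He.
  destruct (Hf (g t) (Hi t Ht) e He) as [d1 [Hd1 H1]].
  destruct (Hg t Ht d1 Hd1) as [d2 [Hd2 H2]].
  exists d2; split; auto.
Qed.

Lemma cont2_comb f g : cont1 f -> cont1 g -> into01 f -> into01 g ->
  cont2 (fun s t => (1 - s) * f t + s * g t).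
Proof.
  intros Hf Hg If Ig s t Hs Ht e He.
  destruct (Hf t Ht (e/4)) as [d1 [Hd1 H1]]; [lra|].
  destruct (Hg t Ht (e/4)) as [d2 [Hd2 H2]]; [lra|].
  exists (Rmin (Rmin d1 d2) (e/4)); split.
  { apply Rmin_glb_lt; [apply Rmin_glb_lt|]; lra. }
  intros s' t' Hs' Ht' Hds Hdt.
  assert (A1: Rabs (t'-t) < d1) by (eapply Rmin_lt_l, Rmin_lt_l; eassumption).
  assert (A2: Rabs (t'-t) < d2) by (eapply Rmin_lt_r, Rmin_lt_l; eassumption).
  assert (A3: Rabs (s'-s) < e/4) by (eapply Rmin_lt_r; eassumption).
  specialize (H1 t' Ht' A1). specialize (H2 t' Ht' A2).
  pose proof (If t Ht) as Ft. pose proof (Ig t Ht) as Gt. unfold I01 in *.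
  replace ((1 - s') * f t' + s' * g t' - ((1 - s) * f t + s * g t)) with
    ((1 - s') * (f t' - f t) + s' * (g t' - g t) + (s - s') * f t + (s' - s) * g t) by ring.
  revert H1 H2 A3. unfold Rabs. repeat destruct Rcase_abs; intros; nra.
Qed.

Lemma comb_I01 a b s : I01 s -> I01 a -> I01 b -> I01 ((1 - s) * a + s * b).
Proof. unfold I01; intros; nra. Qed.

Lemma cont01sq_comp1 {X : TopSpace} (p : R -> X) (phi : R -> R -> R) :
  cont01 p -> cont2 phi -> (forall s t, I01 s -> I01 t -> I01 (phi s t)) ->
  cont01sq (fun s t => p (phi s t)).
Proof.
  intros Hp Hphi Hi U HU s t Hs Ht HUst.
  destruct (Hp U HU (phi s t) (Hi s t Hs Ht) HUst) as [e [He H]].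
  destruct (Hphi s t Hs Ht e He) as [d [Hd H2]].
  exists d; split; [auto|]. intros; apply H; auto.
Qed.

Lemma cont01sq_comp2 {X : TopSpace} (G : R -> R -> X) (f g : R -> R -> R) :
  cont01sq G -> cont2 f -> cont2 g ->
  (forall s t, I01 s -> I01 t -> I01 (f s t)) ->
  (forall s t, I01 s -> I01 t -> I01 (g s t)) ->
  cont01sq (fun s t => G (f s t) (g s t)).
Proof.
  intros HG Hf Hg If Ig U HU s t Hs Ht HUst.
  destruct (HG U HU (f s t) (g s t) (If s t Hs Ht) (Ig s t Hs Ht) HUst) as [e [He H]].
  destruct (Hf s t Hs Ht e He) as [d1 [Hd1 H1]].
  destruct (Hg s t Hs Ht e He) as [d2 [Hd2 H2]].
  exists (Rmin d1 d2); split; [apply Rmin_glb_lt; auto|].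
  intros s' t' Hs' Ht' A B.
  assert (Rabs (s'-s) < d1) by (eapply Rmin_lt_l; eassumption).
  assert (Rabs (s'-s) < d2) by (eapply Rmin_lt_r; eassumption).
  assert (Rabs (t'-t) < d1) by (eapply Rmin_lt_l; eassumption).
  assert (Rabs (t'-t) < d2) by (eapply Rmin_lt_r; eassumption).
  apply H; auto.
Qed.

Lemma cont01_comp {X : TopSpace} (p : R -> X) (h : R -> R) :
  cont01 p -> cont1 h -> into01 h -> cont01 (fun t => p (h t)).
Proof.
  intros Hp Hh Hi U HU t Ht HUt.
  destruct (Hp U HU (h t) (Hi t Ht) HUt) as [e [He H]].
  destruct (Hh t Ht e He) as [d [Hd H2]].
  exists d; split; auto.
Qed.

Lemma phtpy_ext {X : TopSpace} (a b a' b' : R -> X) :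
  (forall t, I01 t -> a t = a' t) -> (forall t, I01 t -> b t = b' t) ->
  phtpy a b -> phtpy a' b'.
Proof.
  intros Ea Eb [H [Hc [H0 [H1 He]]]]. exists H; repeat split; auto.
  - intros t Ht; rewrite <- Ea; auto.
  - intros t Ht; rewrite <- Eb; auto.
  - rewrite <- Ea; auto. apply He; auto.
  - rewrite <- Ea; auto. apply He; auto.
Qed.

Lemma phtpy_refl {X : TopSpace} (a : R -> X) : cont01 a -> phtpy a a.
Proof.
  intros Ha. exists (fun s t => a t). repeat split; auto.
  intros U HU s t Hs Ht HUt. destruct (Ha U HU t Ht HUt) as [e [He H]].
  exists e; split; auto.
Qed.

Lemma phtpy_sym {X : TopSpace} (a b : R -> X) : phtpy a b -> phtpy b a.
Proof.
  intros [H [Hc [H0 [H1 He]]]].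
  exists (fun s t => H (1 - s) t). repeat split.
  - intros U HU s t Hs Ht HUt.
    assert (I01 (1-s)) by (unfold I01 in *; lra).
    destruct (Hc U HU (1-s) t H2 Ht HUt) as [e [Hep HH]].
    exists e; split; auto. intros s' t' Hs' Ht' A B. apply HH; auto.
    unfold I01 in *; lra. replace (1 - s' - (1 - s)) with (- (s' - s)) by ring.
    rewrite Rabs_Ropp; auto.
  - intros t Ht. replace (1 - 0) with 1 by ring. auto.
  - intros t Ht. replace (1 - 1) with 0 by ring. auto.
  - destruct (He (1-s)) as [E0 _]. unfold I01 in *; lra.
    destruct (He 1) as [E1 _]; auto. rewrite E0, <- E1, H1; auto.
  - destruct (He (1-s)) as [_ E0]. unfold I01 in *; lra.
    destruct (He 1) as [_ E1]; auto. rewrite E0, <- E1, H1; auto.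
Qed.

Lemma phtpy_trans {X : TopSpace} (a b c : R -> X) : phtpy a b -> phtpy b c -> phtpy a c.
Proof.
  intros [H [Hc [H0 [H1 He]]]] [K [Kc [K0 [K1 Ke]]]].
  exists (fun s t => if Rle_dec s (1/2) then H (2*s) t else K (2*s-1) t).
  repeat split.
  - intros U HU s t Hs Ht HUt.
    destruct (Rle_dec s (1/2)) as [Hle|Hgt].
    + destruct (Rlt_le_dec s (1/2)) as [Hlt|Heq].
      * assert (I01 (2*s)) by (unfold I01 in *; lra).
        destruct (Hc U HU (2*s) t H2 Ht HUt) as [e [Hep HH]].
        exists (Rmin (e/2) (1/2 - s)); split. apply Rmin_glb_lt; lra.
        intros s' t' Hs' Ht' A B.
        assert (Rabs (s'-s) < e/2) by (eapply Rmin_lt_l; eassumption).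
        assert (Rabs (s'-s) < 1/2 - s) by (eapply Rmin_lt_r; eassumption).
        destruct (Rle_dec s' (1/2)).
        -- apply HH; auto. unfold I01 in *; lra.
           replace (2*s' - 2*s) with (2*(s'-s)) by ring. rewrite Rabs_mult, Rabs_right; lra.
           assert (Rabs (t'-t) < e/2) by (eapply Rmin_lt_l; eassumption). lra.
        -- exfalso. revert H4. unfold Rabs; destruct Rcase_abs; lra.
      * assert (s = 1/2) by lra. subst s.
        replace (2 * (1/2)) with 1 in HUt by field.
        rewrite H1 in HUt; auto. rewrite <- K0 in HUt; auto.
        destruct (Hc U HU 1 t I01_1 Ht) as [e1 [He1 HH1]].
        { rewrite H1; auto. rewrite <- K0; auto. }
        destruct (Kc U HU 0 t I01_0 Ht HUt) as [e2 [He2 KK]].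
        exists (Rmin (e1/2) (e2/2)); split. apply Rmin_glb_lt; lra.
        intros s' t' Hs' Ht' A B.
        assert (Rabs (s'-1/2) < e1/2) by (eapply Rmin_lt_l; eassumption).
        assert (Rabs (s'-1/2) < e2/2) by (eapply Rmin_lt_r; eassumption).
        assert (Rabs (t'-t) < e1/2) by (eapply Rmin_lt_l; eassumption).
        assert (Rabs (t'-t) < e2/2) by (eapply Rmin_lt_r; eassumption).
        destruct (Rle_dec s' (1/2)).
        -- apply HH1; auto. unfold I01 in *; lra.
           replace (2*s' - 1) with (2*(s'-1/2)) by field. rewrite Rabs_mult, Rabs_right; lra. lra.
        -- apply KK; auto. unfold I01 in *; lra.
           replace (2*s' - 1 - 0) with (2*(s'-1/2)) by field. rewrite Rabs_mult, Rabs_right; lra. lra.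
    + assert (I01 (2*s-1)) by (unfold I01 in *; lra).
      destruct (Kc U HU (2*s-1) t H2 Ht HUt) as [e [Hep KK]].
      exists (Rmin (e/2) (s - 1/2)); split. apply Rmin_glb_lt; lra.
      intros s' t' Hs' Ht' A B.
      assert (Rabs (s'-s) < e/2) by (eapply Rmin_lt_l; eassumption).
      assert (Rabs (s'-s) < s - 1/2) by (eapply Rmin_lt_r; eassumption).
      assert (Rabs (t'-t) < e/2) by (eapply Rmin_lt_l; eassumption).
      destruct (Rle_dec s' (1/2)).
      -- exfalso. revert H4. unfold Rabs; destruct Rcase_abs; lra.
      -- apply KK; auto. unfold I01 in *; lra.
         replace (2*s' - 1 - (2*s-1)) with (2*(s'-s)) by ring. rewrite Rabs_mult, Rabs_right; lra. lra.
  - intros t Ht. destruct Rle_dec; [|lra]. replace (2*0) with 0 by ring. auto.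
  - intros t Ht. destruct Rle_dec; [lra|]. replace (2*1-1) with 1 by ring. auto.
  - destruct Rle_dec.
    + apply He. unfold I01 in *; lra.
    + destruct (Ke (2*s-1)) as [E _]. unfold I01 in *; lra.
      rewrite E. destruct (Ke 0) as [E0 _]; auto. rewrite <- E0, K0, <- H1, (proj1 (He 1 I01_1)); auto.
  - destruct Rle_dec.
    + apply He. unfold I01 in *; lra.
    + destruct (Ke (2*s-1)) as [_ E]. unfold I01 in *; lra.
      rewrite E. destruct (Ke 0) as [_ E0]; auto. rewrite <- E0, K0, <- H1, (proj2 (He 1 I01_1)); auto.
Qed.

Lemma into01_id : into01 (fun t => t). Proof. intros t H; exact H. Qed.
Lemma into01_const c : I01 c -> into01 (fun _ => c). Proof. intros H t _; exact H. Qed.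

Lemma reparam {X : TopSpace} (p : R -> X) (h : R -> R) :
  cont01 p -> cont1 h -> into01 h -> h 0 = 0 -> h 1 = 1 ->
  phtpy (fun t => p (h t)) p.
Proof.
  intros Hp Hh Ih H0 H1.
  exists (fun s t => p ((1 - s) * h t + s * t)). repeat split.
  - apply cont01sq_comp1; auto.
    + apply cont2_comb; auto using cont1_id, into01_id.
    + intros; apply comb_I01; auto.
  - intros t _; f_equal; ring.
  - intros t _; f_equal; ring.
  - f_equal; rewrite H0; ring.
  - f_equal; rewrite H1; ring.
Qed.

Lemma reparam_null {X : TopSpace} (p : R -> X) (h : R -> R) :
  cont01 p -> cont1 h -> into01 h -> h 0 = 0 -> h 1 = 0 ->
  phtpy (fun t => p (h t)) (fun _ => p 0).
Proof.
  intros Hp Hh Ih H0 H1.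
  exists (fun s t => p ((1 - s) * h t + s * 0)). repeat split.
  - apply cont01sq_comp1; auto.
    + apply cont2_comb; auto using cont1_const, into01_const.
    + intros; apply comb_I01; auto.
  - intros t _; f_equal; ring.
  - intros t _; f_equal; ring.
  - f_equal; rewrite H0; ring.
  - f_equal; rewrite H1; ring.
Qed.

Lemma square_lemma {X : TopSpace} (G : R -> R -> X) (s0 t0 s1 t1 : R -> R) :
  cont01sq G -> cont1 s0 -> cont1 t0 -> cont1 s1 -> cont1 t1 ->
  into01 s0 -> into01 t0 -> into01 s1 -> into01 t1 ->
  s0 0 = s1 0 -> t0 0 = t1 0 -> s0 1 = s1 1 -> t0 1 = t1 1 ->
  phtpy (fun t => G (s0 t) (t0 t)) (fun t => G (s1 t) (t1 t)).
Proof.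
  intros HG C1 C2 C3 C4 I1 I2 I3 I4 E1 E2 E3 E4.
  exists (fun s t => G ((1 - s) * s0 t + s * s1 t) ((1 - s) * t0 t + s * t1 t)).
  repeat split.
  - apply cont01sq_comp2; auto; try (apply cont2_comb; auto); intros; apply comb_I01; auto.
  - intros t _; f_equal; ring.
  - intros t _; f_equal; ring.
  - rewrite <- E1, <- E2; f_equal; ring.
  - rewrite <- E3, <- E4; f_equal; ring.
Qed.

Lemma mono_surj_cont (f : R -> R) :
  into01 f ->
  (forall a b, I01 a -> I01 b -> a <= b -> f a <= f b) ->
  (forall y, I01 y -> exists t, I01 t /\ f t = y) ->
  cont1 f.
Proof.
  intros If Mf Sf t Ht e He.
  pose proof (If t Ht) as Ft.
  destruct (Sf (Rmax 0 (f t - e/2))) as [t1 [Ht1 E1]].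
  { unfold I01, Rmax in *; destruct Rle_dec; lra. }
  destruct (Sf (Rmin 1 (f t + e/2))) as [t2 [Ht2 E2]].
  { unfold I01, Rmin in *; destruct Rle_dec; lra. }
  assert (L: 0 < f t -> t1 < t).
  { intros Hpos. destruct (Rlt_le_dec t1 t); auto. exfalso.
    pose proof (Mf t t1 Ht Ht1 r). rewrite E1 in H. unfold Rmax in H; destruct Rle_dec; lra. }
  assert (U: f t < 1 -> t < t2).
  { intros Hlt. destruct (Rlt_le_dec t t2); auto. exfalso.
    pose proof (Mf t2 t Ht2 Ht r). rewrite E2 in H. unfold Rmin in H; destruct Rle_dec; lra. }
  exists (Rmin (if Rlt_dec 0 (f t) then t - t1 else 1)
               (if Rlt_dec (f t) 1 then t2 - t else 1)).
  split.
  { apply Rmin_glb_lt; destruct Rlt_dec as [P|P]; try lra; first [specialize (L P) | specialize (U P)]; lra. }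
  intros s Hs Hd.
  pose proof (Rmin_lt_l _ _ _ Hd) as D1. pose proof (Rmin_lt_r _ _ _ Hd) as D2.
  assert (A: f t - e/2 <= f s).
  { destruct (Rle_dec t s). { pose proof (Mf t s Ht Hs r); lra. }
    destruct (Rlt_dec 0 (f t)) as [P|P]; [|pose proof (If s Hs); unfold I01 in *; lra].
    assert (t1 <= s). { revert D1; unfold Rabs; destruct Rcase_abs; lra. }
    pose proof (Mf t1 s Ht1 Hs H). rewrite E1 in H0. pose proof (Rmax_r 0 (f t - e/2)). lra. }
  assert (B: f s <= f t + e/2).
  { destruct (Rle_dec s t). { pose proof (Mf s t Hs Ht r); lra. }
    destruct (Rlt_dec (f t) 1) as [P|P]; [|pose proof (If s Hs); unfold I01 in *; lra].
    assert (s <= t2). { revert D2; unfold Rabs; destruct Rcase_abs; lra. }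
    pose proof (Mf s t2 Hs Ht2 H). rewrite E2 in H0. pose proof (Rmin_r 1 (f t + e/2)). lra. }
  unfold Rabs; destruct Rcase_abs; lra.
Qed.

Lemma local_replace {X : TopSpace} (p1 p2 : R -> X) (l r : R) :
  cont01 p1 -> 0 <= l -> l < r -> r <= 1 ->
  (forall t, I01 t -> (t <= l \/ r <= t) -> p1 t = p2 t) ->
  phtpy (fun u => p1 (l + u * (r - l))) (fun u => p2 (l + u * (r - l))) ->
  phtpy p1 p2.
Proof.
  intros Hp Hl Hlr Hr Eq [K [Kc [K0 [K1 Ke]]]].
  assert (Kl : forall s, I01 s -> K s 0 = p1 l).
  { intros s Hs. rewrite (proj1 (Ke s Hs)). f_equal; ring. }
  assert (Kr : forall s, I01 s -> K s 1 = p1 r).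
  { intros s Hs. rewrite (proj2 (Ke s Hs)). f_equal; ring. }
  set (c := r - l).
  exists (fun s t => if Rle_dec l t then if Rle_dec t r then K s ((t - l) / c) else p1 t else p1 t).
  repeat split.
  - intros U HU s t Hs Ht HUt.
    destruct (Rle_dec l t) as [Lt|Lt]; [destruct (Rle_dec t r) as [Rt|Rt]|].
    +
      assert (Iu : I01 ((t - l)/c)).
      { unfold I01, c. split. apply Rdiv_le_0_compat; lra.
        apply (Rmult_le_reg_r (r-l)); [lra|]. unfold Rdiv. rewrite Rmult_assoc, Rinv_l; lra. }
      destruct (Kc U HU s ((t-l)/c) Hs Iu HUt) as [e [He HK]].
      (* continuity of p1 at l and r, relevant when t is an endpoint *)
      assert (PL : exists e1, e1 > 0 /\ (forall t', I01 t' -> Rabs (t'-t) < e1 -> t' < l -> U (p1 t'))).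
      { destruct (Req_dec t l) as [E|E].
        - assert (U (p1 l)). { rewrite <- Kl with s; auto. replace 0 with ((t-l)/c); auto. subst; unfold Rdiv; ring. }
          destruct (Hp U HU l) as [e1 [He1 HP]]; auto. unfold I01; lra.
          exists e1; split; auto. intros. subst; auto.
        - exists (t - l); split; [lra|]. intros t' _ Ht' Hll. exfalso. revert Ht'. unfold Rabs; destruct Rcase_abs; lra. }
      assert (PR : exists e1, e1 > 0 /\ (forall t', I01 t' -> Rabs (t'-t) < e1 -> r < t' -> U (p1 t'))).
      { destruct (Req_dec t r) as [E|E].
        - assert (U (p1 r)). { rewrite <- Kr with s; auto. replace 1 with ((t-l)/c); auto. subst; unfold c; field; lra. }
          destruct (Hp U HU r) as [e1 [He1 HP]]; auto. unfold I01; lra.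
          exists e1; split; auto. intros. subst; auto.
        - exists (r - t); split; [lra|]. intros t' _ Ht' Hll. exfalso. revert Ht'. unfold Rabs; destruct Rcase_abs; lra. }
      destruct PL as [e1 [He1 PL]]. destruct PR as [e2 [He2 PR]].
      exists (Rmin (Rmin e (e * c)) (Rmin e1 e2)). split.
      { repeat apply Rmin_glb_lt; try lra. unfold c; nra. }
      intros s' t' Hs' Ht' A B.
      assert (B1 : Rabs (t'-t) < e) by (eapply Rmin_lt_l, Rmin_lt_l; eassumption).
      assert (B2 : Rabs (t'-t) < e * c) by (eapply Rmin_lt_r, Rmin_lt_l; eassumption).
      assert (B3 : Rabs (t'-t) < e1) by (eapply Rmin_lt_l, Rmin_lt_r; eassumption).
      assert (B4 : Rabs (t'-t) < e2) by (eapply Rmin_lt_r, Rmin_lt_r; eassumption).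
      assert (A1 : Rabs (s'-s) < e) by (eapply Rmin_lt_l, Rmin_lt_l; eassumption).
      destruct (Rle_dec l t') as [Lt'|Lt']; [destruct (Rle_dec t' r) as [Rt'|Rt']|].
      * apply HK; auto.
        { unfold I01, c. split. apply Rdiv_le_0_compat; lra.
          apply (Rmult_le_reg_r (r-l)); [lra|]. unfold Rdiv. rewrite Rmult_assoc, Rinv_l; lra. }
        replace ((t'-l)/c - (t-l)/c) with ((t'-t)/c) by (unfold c; field; lra).
        unfold Rdiv. rewrite Rabs_mult, Rabs_inv, (Rabs_right c) by (unfold c; lra).
        apply (Rmult_lt_reg_r c); [unfold c; lra|]. rewrite Rmult_assoc, Rinv_l by (unfold c; lra). lra.
      * apply PR; auto; lra.
      * apply PL; auto; lra.
    +
      destruct (Hp U HU t Ht HUt) as [e [He HP]].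
      exists (Rmin e (t - r)); split. apply Rmin_glb_lt; lra.
      intros s' t' Hs' Ht' A B.
      assert (Rabs (t'-t) < e) by (eapply Rmin_lt_l; eassumption).
      assert (Rabs (t'-t) < t - r) by (eapply Rmin_lt_r; eassumption).
      assert (~ t' <= r). { revert H0; unfold Rabs; destruct Rcase_abs; lra. }
      destruct Rle_dec; [destruct Rle_dec; [contradiction|]|]; apply HP; auto.
    + destruct (Hp U HU t Ht HUt) as [e [He HP]].
      exists (Rmin e (l - t)); split. apply Rmin_glb_lt; lra.
      intros s' t' Hs' Ht' A B.
      assert (Rabs (t'-t) < e) by (eapply Rmin_lt_l; eassumption).
      assert (Rabs (t'-t) < l - t) by (eapply Rmin_lt_r; eassumption).
      assert (~ l <= t'). { revert H0; unfold Rabs; destruct Rcase_abs; lra. }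
      destruct Rle_dec; [contradiction|]; apply HP; auto.
  - intros t Ht. destruct Rle_dec; [destruct Rle_dec|]; auto.
    rewrite K0. f_equal; unfold c; field; lra.
    unfold I01, c. split. apply Rdiv_le_0_compat; lra.
    apply (Rmult_le_reg_r (r-l)); [lra|]. unfold Rdiv. rewrite Rmult_assoc, Rinv_l; lra.
  - intros t Ht. destruct Rle_dec; [destruct Rle_dec|].
    + rewrite K1. f_equal; unfold c; field; lra.
      unfold I01, c. split. apply Rdiv_le_0_compat; lra.
      apply (Rmult_le_reg_r (r-l)); [lra|]. unfold Rdiv. rewrite Rmult_assoc, Rinv_l; lra.
    + apply Eq; auto; lra.
    + apply Eq; auto; lra.
  - destruct Rle_dec; [destruct Rle_dec|]; auto; try lra.
    assert (l = 0) by lra. subst l. replace ((0-0)/c) with 0 by (unfold Rdiv; ring).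
    rewrite Kl; auto.
  - destruct Rle_dec; [destruct Rle_dec|]; auto; try lra.
    assert (r = 1) by lra. subst r. replace ((1-l)/c) with 1 by (unfold c; field; lra).
    rewrite Kr; auto.
Qed.

Lemma unif_delta {X : TopSpace} (x : X) (a : nat -> R -> X) (U : X -> Prop) :
  (forall i, is_loop x (a i)) -> is_open X U -> U x ->
  forall N, exists d, d > 0 /\ forall i, (i < N)%nat -> forall u, I01 u -> (u < d \/ u > 1 - d) -> U (a i u).
Proof.
  intros La HU Ux N. induction N as [|N [d [Hd IH]]].
  - exists 1; split; [lra|]. intros; lia.
  - destruct (La N) as [C [A0 A1]].
    destruct (C U HU 0 I01_0) as [e0 [He0 H0]]. { rewrite A0; auto. }
    destruct (C U HU 1 I01_1) as [e1 [He1 H1]]. { rewrite A1; auto. }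
    exists (Rmin d (Rmin e0 e1)). split. { repeat apply Rmin_glb_lt; auto. }
    intros i Hi u Hu Hud.
    pose proof (Rmin_l d (Rmin e0 e1)). pose proof (Rmin_r d (Rmin e0 e1)).
    pose proof (Rmin_l e0 e1). pose proof (Rmin_r e0 e1).
    destruct (Nat.eq_dec i N) as [->|Ne].
    + destruct Hud as [Hud|Hud]; unfold I01 in Hu.
      * apply H0; auto. rewrite Rminus_0_r, Rabs_right; lra.
      * apply H1; auto. rewrite Rabs_left1; lra.
    + apply IH; auto. lia. destruct Hud; [left|right]; lra.
Qed.

Lemma piece_cont {X : TopSpace} (x : X) (a : nat -> R -> X) (J : Type) (valid : J -> Prop)
  (idx : J -> nat) (l c : J -> R) (p : R -> X) :
  null_seq x a ->
  (forall j, valid j -> c j > 0) ->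
  (forall N, exists C, C > 0 /\ forall j, valid j -> (idx j < N)%nat -> c j <= C) ->
  (forall j s, valid j -> l j < s < l j + / c j -> p s = a (idx j) ((s - l j) * c j)) ->
  (forall s, I01 s -> (forall j, valid j -> ~ (l j < s < l j + / c j)) -> p s = x) ->
  cont01 p.
Proof.
  intros [La Na] Cpos Cb H1 H2 U HU t Ht HUt.
  destruct (classic (exists j, valid j /\ l j < t < l j + / c j)) as [[j [Vj Tj]]|NJ].
  - pose proof (Cpos j Vj) as cj.
    assert (Ic : c j * / c j = 1) by (field; lra).
    assert (Iv : / c j > 0) by (apply Rinv_0_lt_compat; lra).
    rewrite (H1 j t Vj Tj) in HUt.
    assert (Iu : I01 ((t - l j) * c j)) by (unfold I01; split; nra).
    destruct (proj1 (La (idx j)) U HU _ Iu HUt) as [e [He HA]].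
    exists (Rmin (e / c j) (Rmin (t - l j) (l j + / c j - t))). split.
    { repeat apply Rmin_glb_lt; try lra. apply Rdiv_lt_0_compat; lra. }
    intros s Hs Hd.
    pose proof (Rmin_lt_l _ _ _ Hd) as D1. pose proof (Rmin_lt_l _ _ _ (Rmin_lt_r _ _ _ Hd)) as D2.
    pose proof (Rmin_lt_r _ _ _ (Rmin_lt_r _ _ _ Hd)) as D3.
    assert (Ts : l j < s < l j + / c j). { revert D2 D3; unfold Rabs; destruct Rcase_abs; lra. }
    rewrite (H1 j s Vj Ts). apply HA.
    + unfold I01; split; nra.
    + replace ((s - l j) * c j - (t - l j) * c j) with ((s - t) * c j) by ring.
      rewrite Rabs_mult, (Rabs_right (c j)) by lra.
      apply (Rmult_lt_compat_r (c j)) in D1; [|lra].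
      replace (e / c j * c j) with e in D1 by (field; lra). lra.
  - assert (NJ' : forall j, valid j -> ~ (l j < t < l j + / c j)).
    { intros j Vj Hj; apply NJ; eauto. }
    rewrite (H2 t Ht NJ') in HUt.
    destruct (Na U HU HUt) as [N HN].
    destruct (unif_delta x a U La HU HUt N) as [d [Hd Hdel]].
    destruct (Cb N) as [C [HC HCb]].
    exists (d / C). split. { apply Rdiv_lt_0_compat; lra. }
    intros s Hs Hds.
    destruct (classic (exists j, valid j /\ l j < s < l j + / c j)) as [[j [Vj Tj]]|NS].
    + pose proof (Cpos j Vj) as cj.
      assert (Ic : c j * / c j = 1) by (field; lra).
      rewrite (H1 j s Vj Tj).
      assert (Iu : I01 ((s - l j) * c j)) by (unfold I01; split; nra).
      destruct (le_lt_dec N (idx j)) as [Hge|Hlt]; [apply HN; auto|].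
      apply Hdel; auto.
      pose proof (HCb j Vj Hlt) as Hcj.
      assert (Hdc : d / C * c j <= d).
      { unfold Rdiv. rewrite Rmult_assoc. rewrite <- (Rmult_1_r d) at 2. apply Rmult_le_compat_l; [lra|].
        apply (Rmult_le_reg_l C); [lra|]. rewrite <- Rmult_assoc, Rinv_r, Rmult_1_l, Rmult_1_r; lra. }
      destruct (Rle_dec t (l j)) as [Tl|Tl].
      * left. assert (s - t < d / C) by (revert Hds; unfold Rabs; destruct Rcase_abs; lra).
        assert ((s - t) * c j < d / C * c j) by (apply Rmult_lt_compat_r; lra). nra.
      * right. assert (l j + / c j <= t) by (destruct (Rle_dec (l j + / c j) t); auto; exfalso; apply (NJ' j Vj); lra).
        assert (t - s < d / C) by (revert Hds; unfold Rabs; destruct Rcase_abs; lra).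
        assert ((t - s) * c j < d / C * c j) by (apply Rmult_lt_compat_r; lra). nra.
    + rewrite (H2 s Hs); auto. intros j Vj Hj; apply NS; eauto.
Qed.

Lemma null_loop {X : TopSpace} (x : X) a n : null_seq x a -> is_loop x (a n).
Proof. intros [H _]; auto. Qed.

Lemma loop_cont {X : TopSpace} (x : X) a : is_loop x a -> cont01 a.
Proof. intros [H _]; auto. Qed.

Lemma const_loop {X : TopSpace} (x : X) : is_loop x (const_path x).
Proof.
  repeat split. intros U HU t Ht HUt. exists 1; split; [lra|]. intros; auto.
Qed.

Definition rev {X : TopSpace} (a : R -> X) : R -> X := fun t => a (1 - t).

Lemma rev_loop {X : TopSpace} (x : X) a : is_loop x a -> is_loop x (rev a).
Proof.
  intros [C [A0 A1]]. repeat split; unfold rev.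
  - apply (cont01_comp a (fun t => 1 - t)); auto.
    replace (fun t => 1 - t) with (fun t => (-1) * t + 1) by (apply functional_extensionality; intros; ring).
    apply cont1_lin. intros t Ht; unfold I01 in *; lra.
  - rewrite Rminus_0_r; auto.
  - rewrite Rminus_diag; auto.
Qed.

Definition idx (n k : nat) : nat := (2 ^ n + k - 1)%nat.

Lemma div2_add2 k p : Nat.div2 (k + 2 * p) = (Nat.div2 k + p)%nat.
Proof.
  pose proof (Nat.div2_odd (k + 2 * p)). pose proof (Nat.div2_odd k).
  rewrite Nat.odd_add_mul_2 in H. destruct (Nat.odd k); simpl in *; lia.
Qed.

Lemma pow2_pos n : (1 <= 2 ^ n)%nat.
Proof. induction n; simpl; lia. Qed.

Lemma tern_lo n k : (k < 2 ^ n)%nat -> tern (S n) k = tern n k.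
Proof.
  revert k; induction n; intros k Hk.
  - simpl in Hk. assert (k = 0%nat) by lia. subst; reflexivity.
  - change (tern (S (S n)) k) with ((if Nat.odd k then 1 else 0) + 3 * tern (S n) (Nat.div2 k))%nat.
    change (tern (S n) k) with ((if Nat.odd k then 1 else 0) + 3 * tern n (Nat.div2 k))%nat.
    rewrite IHn; auto. pose proof (Nat.div2_odd k). simpl in Hk.
    destruct (Nat.odd k); simpl in *; lia.
Qed.

Lemma tern_hi n k : (k < 2 ^ n)%nat -> tern (S n) (k + 2 ^ n) = (tern n k + 3 ^ n)%nat.
Proof.
  revert k; induction n; intros k Hk.
  - simpl in Hk. assert (k = 0%nat) by lia. subst; reflexivity.
  - change (tern (S (S n)) (k + 2 ^ S n)) with
      ((if Nat.odd (k + 2 ^ S n) then 1 else 0) + 3 * tern (S n) (Nat.div2 (k + 2 ^ S n)))%nat.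
    change (tern (S n) k) with ((if Nat.odd k then 1 else 0) + 3 * tern n (Nat.div2 k))%nat.
    change (2 ^ S n)%nat with (2 * 2 ^ n)%nat.
    rewrite Nat.odd_add_mul_2, div2_add2, IHn.
    + change (3 ^ S n)%nat with (3 * 3 ^ n)%nat. lia.
    + pose proof (Nat.div2_odd k). simpl in Hk. destruct (Nat.odd k); simpl in *; lia.
Qed.

Lemma lt_pow2_S n k : (k < 2 ^ S n)%nat ->
  (k < 2 ^ n)%nat \/ exists k0, (k0 < 2 ^ n)%nat /\ k = (k0 + 2 ^ n)%nat.
Proof.
  intros H. simpl in H. destruct (lt_dec k (2 ^ n)); [left; auto|right].
  exists (k - 2 ^ n)%nat. lia.
Qed.

Lemma pow3_pos n : 0 < 3 ^ n. Proof. apply pow_lt; lra. Qed.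
Lemma pow3_ge1 n : 1 <= 3 ^ n.
Proof. induction n; simpl; lra. Qed.

Lemma Ileft_eq n k : Ileft n k = (6 * INR (tern n k) + 1) / 3 ^ (n + 1).
Proof. unfold Ileft. rewrite plus_INR, !mult_INR. simpl INR. f_equal; ring. Qed.
Lemma Iright_eq n k : Iright n k = (6 * INR (tern n k) + 2) / 3 ^ (n + 1).
Proof. unfold Iright. rewrite plus_INR, !mult_INR. simpl INR. f_equal; ring. Qed.

Lemma pow3_S n : 3 ^ (S n + 1) = 3 * 3 ^ (n + 1).
Proof. replace (S n + 1)%nat with (S (n+1)) by lia. reflexivity. Qed.

Lemma Ilen n k : Iright n k = Ileft n k + / 3 ^ (n + 1).
Proof. rewrite Ileft_eq, Iright_eq. field. pose proof (pow3_pos (n+1)); lra. Qed.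

Lemma Ileft_lo n k : (k < 2 ^ n)%nat -> Ileft (S n) k = Ileft n k / 3.
Proof. intros H. rewrite !Ileft_eq, tern_lo, pow3_S by auto. field. pose proof (pow3_pos (n+1)); lra. Qed.
Lemma Iright_lo n k : (k < 2 ^ n)%nat -> Iright (S n) k = Iright n k / 3.
Proof. intros H. rewrite !Iright_eq, tern_lo, pow3_S by auto. field. pose proof (pow3_pos (n+1)); lra. Qed.
Lemma Ileft_hi n k : (k < 2 ^ n)%nat -> Ileft (S n) (k + 2 ^ n) = 2/3 + Ileft n k / 3.
Proof.
  intros H. rewrite !Ileft_eq, tern_hi, pow3_S, plus_INR, pow_INR by auto. simpl INR.
  replace (1+1+1) with 3 by ring. rewrite pow_add. pose proof (pow3_pos n). simpl (3 ^ 1). field. lra.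
Qed.
Lemma Iright_hi n k : (k < 2 ^ n)%nat -> Iright (S n) (k + 2 ^ n) = 2/3 + Iright n k / 3.
Proof.
  intros H. rewrite !Iright_eq, tern_hi, pow3_S, plus_INR, pow_INR by auto. simpl INR.
  replace (1+1+1) with 3 by ring. rewrite pow_add. pose proof (pow3_pos n). simpl (3 ^ 1). field. lra.
Qed.

Lemma Ileft_ge n k : / 3 ^ (n + 1) <= Ileft n k.
Proof.
  rewrite Ileft_eq. pose proof (pos_INR (tern n k)). pose proof (pow3_pos (n+1)).
  unfold Rdiv. rewrite <- (Rmult_1_l (/ 3 ^ (n+1))) at 1.
  apply Rmult_le_compat_r; [left; apply Rinv_0_lt_compat; auto| lra].
Qed.
Lemma Ileft_pos n k : 0 < Ileft n k.
Proof. pose proof (Ileft_ge n k). pose proof (Rinv_0_lt_compat _ (pow3_pos (n+1))). lra. Qed.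

Lemma Iright_le n k : (k < 2 ^ n)%nat -> Iright n k <= 1 - / 3 ^ (n + 1).
Proof.
  revert k; induction n; intros k Hk.
  - simpl in Hk. assert (k = 0%nat) by lia. subst. rewrite Iright_eq. simpl. lra.
  - destruct (lt_pow2_S n k Hk) as [H|[k0 [H ->]]].
    + rewrite Iright_lo by auto. pose proof (IHn k H). rewrite pow3_S.
      rewrite Rinv_mult. pose proof (Rinv_0_lt_compat _ (pow3_pos (n+1))). lra.
    + rewrite Iright_hi by auto. pose proof (IHn k0 H). rewrite pow3_S.
      rewrite Rinv_mult. pose proof (Rinv_0_lt_compat _ (pow3_pos (n+1))). lra.
Qed.

Lemma Iright_lo13 n k : (k < 2 ^ n)%nat -> Iright (S n) k <= 1/3.
Proof. intros H. rewrite Iright_lo by auto. pose proof (Iright_le n k H).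
  pose proof (Rinv_0_lt_compat _ (pow3_pos (n+1))). lra. Qed.
Lemma Ileft_hi23 n k : (k < 2 ^ n)%nat -> 2/3 <= Ileft (S n) (k + 2 ^ n).
Proof. intros H. rewrite Ileft_hi by auto. pose proof (Ileft_pos n k). lra. Qed.

Lemma Ilt n k : Ileft n k < Iright n k.
Proof. rewrite Ilen. pose proof (Rinv_0_lt_compat _ (pow3_pos (n+1))). lra. Qed.

Lemma I00 : Ileft 0 0 = 1/3 /\ Iright 0 0 = 2/3.
Proof. rewrite Ileft_eq, Iright_eq. simpl. split; field. Qed.

Lemma tau_disj n k n' k' t : (k < 2 ^ n)%nat -> (k' < 2 ^ n')%nat ->
  Ileft n k < t < Iright n k -> Ileft n' k' <= t <= Iright n' k' -> n = n' /\ k = k'.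
Proof.
  revert k n' k' t; induction n; intros k n' k' t Hk Hk' T1 T2.
  - simpl in Hk. assert (k = 0%nat) by lia. subst. destruct I00 as [A B].
    destruct n' as [|n'].
    + simpl in Hk'. split; lia.
    + exfalso. destruct (lt_pow2_S n' k' Hk') as [H|[k0 [H ->]]].
      * pose proof (Iright_lo13 n' k' H). lra.
      * pose proof (Ileft_hi23 n' k0 H). lra.
  - destruct n' as [|n'].
    + exfalso. simpl in Hk'. assert (k' = 0%nat) by lia. subst. destruct I00 as [A B].
      destruct (lt_pow2_S n k Hk) as [H|[k0 [H ->]]].
      * pose proof (Iright_lo13 n k H). lra.
      * pose proof (Ileft_hi23 n k0 H). lra.
    + destruct (lt_pow2_S n k Hk) as [H|[k0 [H ->]]];
      destruct (lt_pow2_S n' k' Hk') as [H'|[k0' [H' ->]]].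
      * pose proof (Iright_lo13 n k H).
        rewrite Ileft_lo, Iright_lo in T1, T2 by auto.
        destruct (IHn k n' k' (3 * t) H H') as [-> ->]; auto; lra.
      * exfalso. pose proof (Iright_lo13 n k H). pose proof (Ileft_hi23 n' k0' H'). lra.
      * exfalso. pose proof (Iright_lo13 n' k' H'). pose proof (Ileft_hi23 n k0 H). lra.
      * rewrite Ileft_hi, Iright_hi in T1, T2 by auto.
        destruct (IHn k0 n' k0' (3 * t - 2) H H') as [-> ->]; auto; lra.
Qed.

Lemma Rchain n : Ileft n (2 ^ n - 1) = 1 - 2 / 3 ^ (n + 1) /\ Iright n (2 ^ n - 1) = 1 - / 3 ^ (n + 1).
Proof.
  induction n.
  - simpl. rewrite Ileft_eq, Iright_eq. simpl. split; field.
  - replace (2 ^ S n - 1)%nat with ((2 ^ n - 1) + 2 ^ n)%nat by (simpl; pose proof (pow2_pos n); lia).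
    assert (H : (2 ^ n - 1 < 2 ^ n)%nat) by (pose proof (pow2_pos n); lia).
    rewrite Ileft_hi, Iright_hi, pow3_S by auto. destruct IHn as [A B]. rewrite A, B.
    pose proof (pow3_pos (n+1)). split; field; lra.
Qed.

Lemma Lchain n : Ileft n 0 = / 3 ^ (n + 1) /\ Iright n 0 = 2 / 3 ^ (n + 1).
Proof.
  induction n.
  - rewrite Ileft_eq, Iright_eq. simpl. split; field.
  - assert (H : (0 < 2 ^ n)%nat) by (pose proof (pow2_pos n); lia).
    rewrite Ileft_lo, Iright_lo, pow3_S by auto. destruct IHn as [A B]. rewrite A, B.
    pose proof (pow3_pos (n+1)). split; field; lra.
Qed.

Lemma idx_inj n k n' k' : (k < 2 ^ n)%nat -> (k' < 2 ^ n')%nat -> idx n k = idx n' k' -> n = n' /\ k = k'.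
Proof.
  unfold idx. intros Hk Hk' E. pose proof (pow2_pos n). pose proof (pow2_pos n').
  destruct (lt_eq_lt_dec n n') as [[L|L]|L].
  - exfalso. assert (2 ^ S n <= 2 ^ n')%nat by (apply Nat.pow_le_mono_r; lia). simpl in H1. lia.
  - subst; split; lia.
  - exfalso. assert (2 ^ S n' <= 2 ^ n)%nat by (apply Nat.pow_le_mono_r; lia). simpl in H1. lia.
Qed.

Definition rlev (i : nat) : nat := Nat.log2 (S i).

Lemma rlev_idx n k : (k < 2 ^ n)%nat -> rlev (idx n k) = n.
Proof.
  intros Hk. unfold rlev, idx. pose proof (pow2_pos n). apply Nat.log2_unique; [lia|].
  simpl. lia.
Qed.

Lemma idx_surj i : exists n k, (k < 2 ^ n)%nat /\ i = idx n k.
Proof.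
  destruct (Nat.log2_spec (S i)) as [A B]; [lia|].
  exists (Nat.log2 (S i)), (S i - 2 ^ Nat.log2 (S i))%nat. unfold idx. simpl in B. split; lia.
Qed.

Lemma idx_ge n k : (n <= idx n k)%nat.
Proof.
  unfold idx. assert (forall m, (S m <= 2 ^ m)%nat) by (induction m; simpl; lia).
  pose proof (H n). lia.
Qed.

Lemma tau_val {X : TopSpace} (x : X) s p n k t : IsTauProd x s p -> (k < 2 ^ n)%nat ->
  Ileft n k <= t <= Iright n k -> p t = s (idx n k) ((t - Ileft n k) * 3 ^ (n + 1)).
Proof. intros [H _] Hk Ht. apply H; auto. Qed.

Lemma tau_x {X : TopSpace} (x : X) s p t : IsTauProd x s p -> I01 t ->
  (forall n k, (k < 2 ^ n)%nat -> ~ (Ileft n k < t < Iright n k)) -> p t = x.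
Proof. intros [_ H] Ht N. apply H; auto. Qed.

Lemma tau_unique {X : TopSpace} (x : X) s p q : IsTauProd x s p -> IsTauProd x s q ->
  forall t, I01 t -> p t = q t.
Proof.
  intros Hp Hq t Ht.
  destruct (classic (exists n k, (k < 2 ^ n)%nat /\ Ileft n k < t < Iright n k)) as [[n [k [Hk T]]]|N].
  - rewrite (tau_val x s p n k t), (tau_val x s q n k t); auto; lra.
  - rewrite (tau_x x s p t), (tau_x x s q t); auto; intros n k Hk T; apply N; eauto.
Qed.

Definition TauF {X : TopSpace} (x : X) (s : nat -> R -> X) (t : R) : X :=
  match excluded_middle_informative (exists nk : nat * nat, (snd nk < 2 ^ fst nk)%nat /\
        Ileft (fst nk) (snd nk) < t < Iright (fst nk) (snd nk)) with
  | left H => let nk := proj1_sig (constructive_indefinite_description _ H) in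
      s (idx (fst nk) (snd nk)) ((t - Ileft (fst nk) (snd nk)) * 3 ^ (fst nk + 1))
  | right _ => x
  end.

Lemma TauF_spec {X : TopSpace} (x : X) s : (forall i, is_loop x (s i)) -> IsTauProd x s (TauF x s).
Proof.
  intros Ls. split.
  - intros n k t Hk Ht. unfold TauF. destruct excluded_middle_informative as [H|H].
    + destruct (constructive_indefinite_description _ H) as [[n' k'] [Hk' T']]. simpl in *.
      destruct (tau_disj n' k' n k t) as [-> ->]; auto.
    + assert (t = Ileft n k \/ t = Iright n k).
      { destruct (Req_dec t (Ileft n k)); auto. destruct (Req_dec t (Iright n k)); auto.
        exfalso. apply H. exists (n, k). simpl. split; auto. lra. }
      destruct (Ls (2 ^ n + k - 1)%nat) as [_ [A0 A1]].
      destruct H0 as [->| ->].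
      * rewrite Rminus_diag, Rmult_0_l; auto.
      * rewrite Ilen. replace ((Ileft n k + / 3 ^ (n + 1) - Ileft n k) * 3 ^ (n + 1)) with 1; auto.
        field. pose proof (pow3_pos (n+1)); lra.
  - intros t Ht N. unfold TauF. destruct excluded_middle_informative as [[[n k] [Hk T]]|H]; auto.
    exfalso. apply (N n k); auto.
Qed.

Lemma tau_cont {X : TopSpace} (x : X) s p : null_seq x s -> IsTauProd x s p -> cont01 p.
Proof.
  intros Ns Hp.
  apply (piece_cont x s (nat * nat) (fun j => (snd j < 2 ^ fst j)%nat) (fun j => idx (fst j) (snd j))
           (fun j => Ileft (fst j) (snd j)) (fun j => 3 ^ (fst j + 1)) p Ns).
  - intros; apply pow3_pos.
  - intros N. exists (3 ^ (N + 1)). split; [apply pow3_pos|].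
    intros [n k] Hk Hi. simpl in *. pose proof (idx_ge n k). apply Rle_pow; [lra|lia].
  - intros [n k] t Hk Ht. simpl in *. rewrite <- Ilen in Ht. apply (tau_val x s p n k t Hp Hk). lra.
  - intros t Ht N. apply (tau_x x s p t Hp Ht). intros n k Hk T. apply (N (n, k) Hk). simpl. rewrite <- Ilen; auto.
Qed.

Lemma tau_0 {X : TopSpace} (x : X) s p : IsTauProd x s p -> p 0 = x.
Proof. intros Hp. apply (tau_x x s p 0 Hp I01_0). intros n k Hk T. pose proof (Ileft_pos n k). lra. Qed.
Lemma tau_1 {X : TopSpace} (x : X) s p : IsTauProd x s p -> p 1 = x.
Proof.
  intros Hp. apply (tau_x x s p 1 Hp I01_1). intros n k Hk T. pose proof (Iright_le n k Hk).
  pose proof (Rinv_0_lt_compat _ (pow3_pos (n+1))). lra.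
Qed.

Lemma tau_loop {X : TopSpace} (x : X) s p : null_seq x s -> IsTauProd x s p -> is_loop x p.
Proof. intros Ns Hp. split; [eapply tau_cont; eauto| split; [eapply tau_0|eapply tau_1]; eauto]. Qed.

Lemma tau_seq_ext {X : TopSpace} (x : X) s s' p : (forall i, s i = s' i) -> IsTauProd x s p -> IsTauProd x s' p.
Proof. intros E. replace s' with s; auto. apply functional_extensionality; auto. Qed.

Definition slotL (k : nat) : R := INR k / INR (k + 1).
Definition slotR (k : nat) : R := INR (k + 1) / INR (k + 2).

Lemma INR_S1 k : INR (k + 1) = INR k + 1. Proof. rewrite plus_INR; simpl; ring. Qed.
Lemma INR_S2 k : INR (k + 2) = INR k + 2. Proof. rewrite plus_INR; simpl; ring. Qed.

Lemma slotL_eq k : slotL k = 1 - / (INR k + 1).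
Proof. unfold slotL. rewrite INR_S1. pose proof (pos_INR k). field. lra. Qed.
Lemma slotR_eq k : slotR k = 1 - / (INR k + 2).
Proof. unfold slotR. rewrite INR_S1, INR_S2. pose proof (pos_INR k). field. lra. Qed.
Lemma slotR_L k : slotR k = slotL (S k).
Proof. rewrite slotR_eq, slotL_eq, S_INR. f_equal. f_equal. ring. Qed.

Lemma slot_len k : slotR k = slotL k + / (INR (k + 1) * INR (k + 2)).
Proof. rewrite slotR_eq, slotL_eq, INR_S1, INR_S2. pose proof (pos_INR k). field. lra. Qed.

Lemma slot_pos k : 0 < INR (k + 1) * INR (k + 2).
Proof. rewrite INR_S1, INR_S2. pose proof (pos_INR k). nra. Qed.

Lemma slotL_mono i j : (i <= j)%nat -> slotL i <= slotL j.
Proof.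
  intros H. rewrite !slotL_eq. apply le_INR in H. pose proof (pos_INR i).
  assert (/ (INR j + 1) <= / (INR i + 1)) by (apply Rinv_le_contravar; lra). lra.
Qed.

Lemma slotL_0 : slotL 0 = 0. Proof. unfold slotL; simpl. field. Qed.
Lemma slotR_lt1 k : slotR k < 1.
Proof. rewrite slotR_eq. pose proof (pos_INR k). pose proof (Rinv_0_lt_compat (INR k + 2)). lra. Qed.
Lemma slotL_lt slotk : slotL slotk < slotR slotk.
Proof. rewrite slot_len. pose proof (Rinv_0_lt_compat _ (slot_pos slotk)). lra. Qed.

Lemma slot_disj k k' t : slotL k < t < slotR k -> slotL k' <= t <= slotR k' -> k = k'.
Proof.
  intros T1 T2. destruct (lt_eq_lt_dec k k') as [[L|L]|L]; auto; exfalso.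
  - pose proof (slotL_mono (S k) k' L). rewrite <- slotR_L in H. lra.
  - pose proof (slotL_mono (S k') k L). rewrite <- slotR_L in H. lra.
Qed.

Lemma slot_exists t : 0 <= t < 1 -> exists k, slotL k <= t <= slotR k.
Proof.
  intros Ht.
  assert (exists K, t <= slotR K).
  { destruct (archimed (/ (1 - t))) as [A _].
    assert (0 < / (1 - t)) by (apply Rinv_0_lt_compat; lra).
    assert (0 < IZR (up (/ (1 - t)))) by lra.
    apply lt_0_IZR in H0. exists (Z.to_nat (up (/ (1 - t)))).
    rewrite slotR_eq, INR_IZR_INZ, Z2Nat.id by lia.
    assert (/ (1 - t) < IZR (up (/ (1 - t))) + 2) by lra.
    assert (/ (IZR (up (/ (1 - t))) + 2) < / / (1 - t)) by (apply Rinv_lt_contravar; nra).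
    rewrite Rinv_inv in H2. lra. }
  destruct H as [K HK]. induction K.
  - exists 0%nat. rewrite slotL_0. lra.
  - destruct (Rle_dec t (slotR K)); auto. exists (S K). rewrite <- slotR_L. lra.
Qed.

Definition inf_par (k : nat) (t : R) : R := (t - slotL k) * INR (k + 1) * INR (k + 2).

Lemma inf_val {X : TopSpace} (x : X) s p k t : IsInfProd x s p ->
  slotL k <= t <= slotR k -> p t = s k (inf_par k t).
Proof. intros [H _] Ht. apply H; auto. Qed.

Lemma inf_endpoints {X : TopSpace} (x : X) s k : (forall i, is_loop x (s i)) ->
  s k (inf_par k (slotL k)) = x /\ s k (inf_par k (slotR k)) = x.
Proof.
  intros Ls. destruct (Ls k) as [_ [A0 A1]]. unfold inf_par. split.
  - rewrite Rminus_diag, !Rmult_0_l; auto.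
  - rewrite slot_len. replace ((slotL k + / (INR (k + 1) * INR (k + 2)) - slotL k) * INR (k + 1) * INR (k + 2)) with 1; auto.
    field. pose proof (slot_pos k) as SP. split; intro E; rewrite E in SP; lra.
Qed.

Lemma inf_x {X : TopSpace} (x : X) s p t : (forall i, is_loop x (s i)) -> IsInfProd x s p -> I01 t ->
  (forall k, ~ (slotL k < t < slotR k)) -> p t = x.
Proof.
  intros Ls Hp Ht N. destruct (Req_dec t 1) as [->|Ne]; [apply Hp|].
  destruct (slot_exists t) as [k Hk]; [unfold I01 in *; lra|].
  rewrite (inf_val x s p k t Hp Hk).
  assert (t = slotL k \/ t = slotR k).
  { destruct (Req_dec t (slotL k)); auto. destruct (Req_dec t (slotR k)); auto.
    exfalso; apply (N k); lra. }
  destruct (inf_endpoints x s k Ls). destruct H as [-> | ->]; auto.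
Qed.

Lemma inf_unique {X : TopSpace} (x : X) s p q : (forall i, is_loop x (s i)) ->
  IsInfProd x s p -> IsInfProd x s q -> forall t, I01 t -> p t = q t.
Proof.
  intros Ls Hp Hq t Ht.
  destruct (classic (exists k, slotL k < t < slotR k)) as [[k T]|N].
  - rewrite (inf_val x s p k t), (inf_val x s q k t); auto; lra.
  - rewrite (inf_x x s p t), (inf_x x s q t); auto; intros k T; apply N; eauto.
Qed.

Definition InfF {X : TopSpace} (x : X) (s : nat -> R -> X) (t : R) : X :=
  match excluded_middle_informative (exists k : nat, slotL k < t < slotR k) with
  | left H => let k := proj1_sig (constructive_indefinite_description _ H) in s k (inf_par k t)
  | right _ => x
  end.

Lemma InfF_spec {X : TopSpace} (x : X) s : (forall i, is_loop x (s i)) -> IsInfProd x s (InfF x s).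
Proof.
  intros Ls. split.
  - intros k t Ht. change (InfF x s t = s k (inf_par k t)).
    unfold InfF. destruct excluded_middle_informative as [H|H].
    + destruct (constructive_indefinite_description _ H) as [k' T']. simpl.
      replace k' with k; auto. symmetry; apply (slot_disj k' k t); auto.
    + assert (t = slotL k \/ t = slotR k).
      { destruct (Req_dec t (slotL k)); auto. destruct (Req_dec t (slotR k)); auto.
        exfalso. apply H. exists k. unfold slotL, slotR in *. lra. }
      destruct (inf_endpoints x s k Ls). destruct H0 as [-> | ->]; auto.
  - unfold InfF. destruct excluded_middle_informative as [[k T]|H]; auto.
    exfalso. pose proof (slotR_lt1 k). lra.
Qed.

Lemma inf_cont {X : TopSpace} (x : X) s p : null_seq x s -> IsInfProd x s p -> cont01 p.
Proof.
  intros Ns Hp. pose proof (proj1 Ns) as Ls.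
  apply (piece_cont x s nat (fun _ => True) (fun k => k) slotL (fun k => INR (k + 1) * INR (k + 2)) p Ns).
  - intros; apply slot_pos.
  - intros N. exists (INR (N + 1) * INR (N + 2)). split; [apply slot_pos|].
    intros k _ Hk. rewrite !INR_S1, !INR_S2. apply lt_INR in Hk. pose proof (pos_INR k). nra.
  - intros k t _ Ht. rewrite <- slot_len in Ht. rewrite (inf_val x s p k t Hp); [|lra].
    unfold inf_par. f_equal. ring.
  - intros t Ht N. apply (inf_x x s p t Ls Hp Ht). intros k T. apply (N k I). rewrite <- slot_len; auto.
Qed.

Lemma inf_loop {X : TopSpace} (x : X) s p : null_seq x s -> IsInfProd x s p -> is_loop x p.
Proof.
  intros Ns Hp. split; [eapply inf_cont; eauto|]. split; [|apply Hp].
  rewrite (inf_val x s p 0 0 Hp). 2:{ rewrite slotL_0. pose proof (slotL_lt 0). rewrite slotL_0 in H. lra. }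
  pose proof (proj1 (inf_endpoints x s 0 (proj1 Ns))) as E. rewrite slotL_0 in E. exact E.
Qed.

Definition bs (n : nat) : R := 1 - / 3 ^ n.
Definition mid (n : nat) : R := 1 - 2 / 3 ^ (n + 1).
Definition be (n : nat) : R := 1 - / 3 ^ (n + 1).

Lemma pow3_add1 n : 3 ^ (n + 1) = 3 * 3 ^ n.
Proof. rewrite pow_add. simpl. ring. Qed.

Lemma block_facts n : bs n < mid n < be n /\ mid n - bs n = / 3 ^ (n + 1) /\ be n - mid n = / 3 ^ (n + 1)
  /\ be n = bs (S n) /\ 0 <= bs n /\ be n < 1.
Proof.
  unfold bs, mid, be. rewrite pow3_add1. pose proof (pow3_ge1 n). replace (S n) with (n+1)%nat by lia.
  rewrite pow3_add1. unfold Rdiv. rewrite Rinv_mult.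
  assert (0 < / 3 ^ n <= 1). { split. apply Rinv_0_lt_compat; lra. rewrite <- Rinv_1; apply Rinv_le_contravar; lra. }
  set (u := / 3 ^ n) in *. repeat split; lra.
Qed.

Lemma bs_mono n m : (n <= m)%nat -> bs n <= bs m.
Proof.
  intros H. unfold bs. assert (3 ^ n <= 3 ^ m) by (apply Rle_pow; [lra|auto]).
  pose proof (pow3_pos n). assert (/ 3 ^ m <= / 3 ^ n) by (apply Rinv_le_contravar; lra). lra.
Qed.

Lemma bs_0 : bs 0 = 0. Proof. unfold bs; simpl. field. Qed.

Lemma pow3_INR N : INR N + 1 <= 3 ^ (N + 1).
Proof. induction N. simpl; lra. rewrite S_INR. replace (S N + 1)%nat with (S (N+1)) by lia. pose proof (pow3_ge1 (N+1)). simpl. lra. Qed.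

Lemma block_exists t : 0 <= t < 1 -> exists n, bs n <= t <= be n.
Proof.
  intros Ht.
  assert (exists N, t <= be N).
  { destruct (archimed (/ (1 - t))) as [A _].
    assert (0 < / (1 - t)) by (apply Rinv_0_lt_compat; lra).
    assert (0 < IZR (up (/ (1 - t)))) by lra. apply lt_0_IZR in H0.
    set (N := Z.to_nat (up (/ (1 - t)))).
    assert (INR N = IZR (up (/ (1 - t)))) by (unfold N; rewrite INR_IZR_INZ, Z2Nat.id by lia; auto).
    exists N. unfold be.
    assert (INR N + 1 <= 3 ^ (N + 1)).
    { apply pow3_INR. }
    assert (/ (1 - t) < 3 ^ (N+1)) by lra.
    assert (HH : / 3 ^ (N+1) < / / (1 - t)) by (apply Rinv_lt_contravar; [apply Rmult_lt_0_compat|]; lra).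
    rewrite Rinv_inv in HH. lra. }
  destruct H as [N HN]. induction N.
  - exists 0%nat. rewrite bs_0. lra.
  - destruct (Rle_dec t (be N)); auto. exists (S N). destruct (block_facts N) as [_ [_ [_ [E _]]]]. lra.
Qed.

Lemma bs_strict n m : (n < m)%nat -> bs n < bs m.
Proof.
  intros H. unfold bs. assert (3 ^ n < 3 ^ m) by (apply Rlt_pow; [lra|auto]).
  pose proof (pow3_pos n). assert (/ 3 ^ m < / 3 ^ n) by (apply Rinv_lt_contravar; [apply Rmult_lt_0_compat|]; lra). lra.
Qed.

Definition blockrel (A B C : nat -> R) (t y : R) : Prop :=
  (t = 1 /\ y = 1) \/ exists n,
    (bs n <= t <= mid n /\ y = A n + (B n - A n) * ((t - bs n) * 3 ^ (n + 1))) \/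
    (mid n <= t <= be n /\ y = B n + (C n - B n) * ((t - mid n) * 3 ^ (n + 1))).

Definition blockok (A B C : nat -> R) : Prop :=
  (forall n, 0 <= A n <= B n /\ B n <= C n /\ C n <= 1) /\ (forall n, C n = A (S n)) /\ A 0%nat = 0 /\
  (forall y, 0 <= y < 1 -> exists n, y <= C n).

Lemma blockrel_fun A B C t y1 y2 : blockok A B C -> blockrel A B C t y1 -> blockrel A B C t y2 -> y1 = y2.
Proof.
  intros [Ok [CA [A0 _]]] H1 H2.
  assert (P : forall n, mid n - bs n = / 3 ^ (n + 1) /\ be n - mid n = / 3 ^ (n + 1)).
  { intros n; destruct (block_facts n) as [_ [? [? _]]]; auto. }
  assert (U : forall n u, u = / 3 ^ (n + 1) -> u * 3 ^ (n + 1) = 1).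
  { intros n u ->. field. pose proof (pow3_pos (n+1)); lra. }
  destruct H1 as [[-> ->]|[n H1]]; destruct H2 as [[E ->]|[m H2]].
  - auto.
  - exfalso. destruct (block_facts m) as [[? ?] [_ [_ [_ [_ B1]]]]]. destruct H2 as [[? _]|[? _]]; lra.
  - exfalso. destruct (block_facts n) as [[? ?] [_ [_ [_ [_ B1]]]]]. destruct H1 as [[? _]|[? _]]; lra.
  - assert (G : forall n m y1 y2, (n < m)%nat ->
      ((bs n <= t <= mid n /\ y1 = A n + (B n - A n) * ((t - bs n) * 3 ^ (n + 1))) \/
       (mid n <= t <= be n /\ y1 = B n + (C n - B n) * ((t - mid n) * 3 ^ (n + 1)))) ->
      ((bs m <= t <= mid m /\ y2 = A m + (B m - A m) * ((t - bs m) * 3 ^ (n + 1 + (m - n)))) \/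
       (mid m <= t <= be m /\ y2 = B m + (C m - B m) * ((t - mid m) * 3 ^ (n + 1 + (m - n))))) -> y1 = y2).
    { clear n m y1 y2 H1 H2. intros n m y1 y2 L H1 H2.
      destruct (block_facts n) as [[F1 F2] [F3 [F4 [F5 _]]]].
      destruct (block_facts m) as [[G1 G2] _].
      assert (bs (S n) <= bs m) by (apply bs_mono; lia).
      destruct H1 as [[T1 ->]|[T1 ->]]; destruct H2 as [[T2 ->]|[T2 ->]]; try lra.
      assert (m = S n). { destruct (Nat.eq_dec m (S n)); auto. pose proof (bs_strict (S n) m ltac:(lia)). lra. }
      subst m. assert (t = be n) by lra. subst t.
      replace (be n - mid n) with (/ 3 ^ (n + 1)) by lra. rewrite Rinv_l by (apply pow_nonzero; lra).
      rewrite <- F5, Rminus_diag, Rmult_0_l, Rmult_0_r, Rplus_0_r, CA. ring. }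
    destruct (lt_eq_lt_dec n m) as [[L|<-]|L].
    + apply (G n m); auto. replace (n + 1 + (m - n))%nat with (m + 1)%nat by lia. auto.
    + destruct (block_facts n) as [[F1 F2] [F3 [F4 _]]].
      destruct H1 as [[T1 ->]|[T1 ->]]; destruct H2 as [[T2 ->]|[T2 ->]]; auto.
      * assert (t = mid n) by lra. subst t. rewrite F3, Rminus_diag, Rmult_0_l, Rinv_l by (apply pow_nonzero; lra). ring.
      * assert (t = mid n) by lra. subst t. rewrite F3, Rminus_diag, Rmult_0_l, Rinv_l by (apply pow_nonzero; lra). ring.
    + symmetry. apply (G m n); auto. replace (m + 1 + (n - m))%nat with (n + 1)%nat by lia. auto.
Qed.

Lemma blockrel_ex A B C t : I01 t -> exists y, blockrel A B C t y.
Proof.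
  intros Ht. destruct (Req_dec t 1) as [->|Ne]. { exists 1; left; auto. }
  destruct (block_exists t) as [n Hn]; [unfold I01 in *; lra|].
  destruct (Rle_dec t (mid n)).
  - eexists; right; exists n; left; split; [lra|reflexivity].
  - eexists; right; exists n; right; split; [lra|reflexivity].
Qed.

Definition BF (A B C : nat -> R) (t : R) : R :=
  match excluded_middle_informative (exists y, blockrel A B C t y) with
  | left H => proj1_sig (constructive_indefinite_description _ H)
  | right _ => 0
  end.

Lemma BF_rel A B C t y : blockok A B C -> blockrel A B C t y -> BF A B C t = y.
Proof.
  intros Ok H. unfold BF. destruct excluded_middle_informative as [E|E].
  - destruct (constructive_indefinite_description _ E) as [y' H']. simpl. eapply blockrel_fun; eauto.
  - exfalso; eauto.
Qed.

Lemma BF_1 A B C : blockok A B C -> BF A B C 1 = 1.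
Proof. intros Ok. apply BF_rel; auto. left; auto. Qed.

Lemma BF_0 A B C : blockok A B C -> BF A B C 0 = 0.
Proof.
  intros Ok. apply BF_rel; auto. right. exists 0%nat. left.
  destruct (block_facts 0) as [[F1 F2] _]. rewrite bs_0 in *. split; [lra|].
  destruct Ok as [_ [_ [A0 _]]]. rewrite A0. ring.
Qed.

Lemma BF_G A B C n t : blockok A B C -> bs n <= t <= mid n ->
  BF A B C t = A n + (B n - A n) * ((t - bs n) * 3 ^ (n + 1)).
Proof. intros Ok H. apply BF_rel; auto. right. exists n. left. auto. Qed.

Lemma BF_R A B C n t : blockok A B C -> mid n <= t <= be n ->
  BF A B C t = B n + (C n - B n) * ((t - mid n) * 3 ^ (n + 1)).
Proof. intros Ok H. apply BF_rel; auto. right. exists n. right. auto. Qed.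

Lemma par_I01 n t l : l <= t <= l + / 3 ^ (n + 1) -> I01 ((t - l) * 3 ^ (n + 1)).
Proof.
  intros H. pose proof (pow3_pos (n+1)). unfold I01. split. nra.
  assert ((t - l) * 3 ^ (n + 1) <= / 3 ^ (n + 1) * 3 ^ (n + 1)) by (apply Rmult_le_compat_r; lra).
  rewrite Rinv_l in H1; lra.
Qed.

Lemma BF_props A B C : blockok A B C ->
  into01 (BF A B C) /\
  (forall a b, I01 a -> I01 b -> a <= b -> BF A B C a <= BF A B C b) /\
  (forall y, I01 y -> exists t, I01 t /\ BF A B C t = y).
Proof.
  intros Ok. pose proof Ok as [Ok1 [CA [A0 Cov]]].
  assert (Amono : forall n m, (n <= m)%nat -> A n <= A m).
  { intros n m H. induction H; [lra|]. specialize (Ok1 m). rewrite <- CA. lra. }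
  assert (VB : forall t, I01 t -> t <> 1 -> exists n, bs n <= t <= be n /\ A n <= BF A B C t <= C n).
  { intros t Ht Ne. destruct (block_exists t) as [n Hn]; [unfold I01 in *; lra|]. exists n. split; auto.
    destruct (block_facts n) as [[F1 F2] [F3 [F4 _]]]. specialize (Ok1 n).
    destruct (Rle_dec t (mid n)).
    - rewrite (BF_G A B C n t Ok) by lra.
      pose proof (par_I01 n t (bs n)). unfold I01 in H. split; nra.
    - rewrite (BF_R A B C n t Ok) by lra.
      pose proof (par_I01 n t (mid n)). unfold I01 in H. split; nra. }
  split; [|split].
  - intros t Ht. destruct (Req_dec t 1) as [->|Ne]. rewrite BF_1; auto.
    destruct (VB t Ht Ne) as [n [_ Hv]]. specialize (Ok1 n). unfold I01; lra.
  - intros t1 t2 H1 H2 Hle.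
    destruct (Req_dec t2 1) as [->|N2].
    { rewrite BF_1 by auto. destruct (Req_dec t1 1) as [->|N1]. rewrite BF_1; auto; lra.
      destruct (VB t1 H1 N1) as [n [_ Hv]]. specialize (Ok1 n). lra. }
    assert (N1 : t1 <> 1) by (unfold I01 in *; lra).
    destruct (VB t1 H1 N1) as [n1 [B1 V1]]. destruct (VB t2 H2 N2) as [n2 [B2 V2]].
    destruct (lt_eq_lt_dec n1 n2) as [[L|<-]|L].
    + assert (C n1 <= A n2) by (rewrite CA; apply Amono; lia). lra.
    + destruct (block_facts n1) as [[F1 F2] [F3 [F4 _]]]. specialize (Ok1 n1).
      destruct (Rle_dec t1 (mid n1)); destruct (Rle_dec t2 (mid n1)).
      * rewrite !(BF_G A B C n1) by (auto; lra).
        assert ((t1 - bs n1) * 3 ^ (n1 + 1) <= (t2 - bs n1) * 3 ^ (n1 + 1))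
          by (apply Rmult_le_compat_r; [left; apply pow3_pos|lra]). nra.
      * rewrite (BF_G A B C n1 t1), (BF_R A B C n1 t2) by (auto; lra).
        pose proof (par_I01 n1 t1 (bs n1)). pose proof (par_I01 n1 t2 (mid n1)). unfold I01 in *. nra.
      * lra.
      * rewrite !(BF_R A B C n1) by (auto; lra).
        assert ((t1 - mid n1) * 3 ^ (n1 + 1) <= (t2 - mid n1) * 3 ^ (n1 + 1))
          by (apply Rmult_le_compat_r; [left; apply pow3_pos|lra]). nra.
    + assert (bs (S n2) <= bs n1) by (apply bs_mono; lia).
      destruct (block_facts n2) as [_ [_ [_ [F5 _]]]].
      assert (t1 = t2) by lra. subst; lra.
  - intros y Hy. destruct (Req_dec y 1) as [->|Ne]. { exists 1; split; auto. apply BF_1; auto. }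
    destruct (Cov y) as [K HK]; [unfold I01 in *; lra|].
    assert (exists n, A n <= y <= C n) as [n Hn].
    { induction K. exists 0%nat; rewrite A0; unfold I01 in Hy; lra.
      destruct (Rle_dec y (C K)); auto. exists (S K). rewrite <- CA. split; [lra|auto]. }
    destruct (block_facts n) as [[F1 F2] [F3 [F4 _]]]. specialize (Ok1 n).
    pose proof (pow3_pos (n + 1)).
    destruct (Rle_dec y (B n)).
    + destruct (Req_dec (B n) (A n)) as [E|E].
      * exists (bs n). split. { pose proof (block_facts n). unfold I01; lra. }
        rewrite (BF_G A B C n) by (auto; lra). rewrite Rminus_diag. lra.
      * exists (bs n + (y - A n) / (B n - A n) / 3 ^ (n + 1)).
        assert (0 <= (y - A n) / (B n - A n) <= 1).
        { split. apply Rdiv_le_0_compat; lra. apply Rmult_le_reg_r with (B n - A n); [lra|].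
          field_simplify; lra. }
        assert (0 <= (y - A n) / (B n - A n) / 3 ^ (n + 1) <= / 3 ^ (n + 1)).
        { split. apply Rdiv_le_0_compat; lra. unfold Rdiv at 1. rewrite <- (Rmult_1_l (/ 3 ^ (n+1))) at 2.
          apply Rmult_le_compat_r; [left; apply Rinv_0_lt_compat|]; lra. }
        split. { pose proof (block_facts n). unfold I01; lra. }
        rewrite (BF_G A B C n) by (auto; lra). field. split; lra.
    + destruct (Req_dec (C n) (B n)) as [E|E]; [lra|].
      exists (mid n + (y - B n) / (C n - B n) / 3 ^ (n + 1)).
      assert (0 <= (y - B n) / (C n - B n) <= 1).
      { split. apply Rdiv_le_0_compat; lra. apply Rmult_le_reg_r with (C n - B n); [lra|].
        field_simplify; lra. }
      assert (0 <= (y - B n) / (C n - B n) / 3 ^ (n + 1) <= / 3 ^ (n + 1)).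
      { split. apply Rdiv_le_0_compat; lra. unfold Rdiv at 1. rewrite <- (Rmult_1_l (/ 3 ^ (n+1))) at 2.
        apply Rmult_le_compat_r; [left; apply Rinv_0_lt_compat|]; lra. }
      split. { pose proof (block_facts n). unfold I01; lra. }
      rewrite (BF_R A B C n) by (auto; lra). field. split; lra.
Qed.

Lemma BF_cont A B C : blockok A B C -> cont1 (BF A B C) /\ into01 (BF A B C).
Proof.
  intros Ok. destruct (BF_props A B C Ok) as [I [M S]]. split; auto. apply mono_surj_cont; auto.
Qed.

Definition h1 : R -> R := BF slotL slotL (fun n => slotR n).
Definition h2 : R -> R := BF (fun n => slotL (2 * n)) (fun n => slotL (2 * n + 1)) (fun n => slotL (2 * n + 2)).

Lemma slotL_I01 k : 0 <= slotL k < 1.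
Proof. rewrite slotL_eq. pose proof (pos_INR k). split.
  assert (/ (INR k + 1) <= 1) by (rewrite <- Rinv_1; apply Rinv_le_contravar; lra). lra.
  assert (0 < / (INR k + 1)) by (apply Rinv_0_lt_compat; lra). lra. Qed.

Lemma h1_ok : blockok slotL slotL (fun n => slotR n).
Proof.
  repeat split; intros.
  - apply slotL_I01.
  - right; auto.
  - rewrite slotR_L. apply slotL_mono. lia.
  - rewrite slotR_L. pose proof (slotL_I01 (S n)). lra.
  - apply slotR_L.
  - apply slotL_0.
  - destruct (slot_exists y H) as [k Hk]. exists k. lra.
Qed.

Lemma h2_ok : blockok (fun n => slotL (2 * n)) (fun n => slotL (2 * n + 1)) (fun n => slotL (2 * n + 2)).
Proof.
  repeat split; intros.
  - apply slotL_I01.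
  - apply slotL_mono; lia.
  - apply slotL_mono; lia.
  - pose proof (slotL_I01 (2 * n + 2)). lra.
  - f_equal; lia.
  - replace (2 * 0)%nat with 0%nat by lia. apply slotL_0.
  - destruct (slot_exists y H) as [k Hk]. exists k. rewrite slotR_L in Hk.
    pose proof (slotL_mono (S k) (2 * k + 2) ltac:(lia)). lra.
Qed.

Lemma lev_ge n k N : (k < 2 ^ n)%nat -> (2 ^ N <= idx n k)%nat -> (N <= n)%nat.
Proof.
  intros Hk H. unfold idx in H. destruct (le_lt_dec N n); auto. exfalso.
  assert (2 ^ S n <= 2 ^ N)%nat by (apply Nat.pow_le_mono_r; lia). simpl in H0. lia.
Qed.

Lemma pow2_m1 n : (2 ^ n - 1 < 2 ^ n)%nat.
Proof. pose proof (pow2_pos n); lia. Qed.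

Definition Rseq {X : TopSpace} (x : X) (a : nat -> R -> X) (i : nat) : R -> X :=
  if Nat.eqb i (idx (rlev i) (2 ^ rlev i - 1)) then a (rlev i) else const_path x.
Definition Lseq {X : TopSpace} (x : X) (b : nat -> R -> X) (i : nat) : R -> X :=
  if Nat.eqb i (idx (rlev i) 0) then rev (b (rlev i)) else const_path x.

Lemma Rseq_R {X : TopSpace} (x : X) a n : Rseq x a (idx n (2 ^ n - 1)) = a n.
Proof. unfold Rseq. rewrite rlev_idx by apply pow2_m1. rewrite Nat.eqb_refl. auto. Qed.
Lemma Rseq_nR {X : TopSpace} (x : X) a n k : (k < 2 ^ n)%nat -> k <> (2 ^ n - 1)%nat ->
  Rseq x a (idx n k) = const_path x.
Proof.
  intros Hk Hne. unfold Rseq. rewrite rlev_idx by auto.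
  destruct (Nat.eqb_spec (idx n k) (idx n (2 ^ n - 1))); auto.
  exfalso. unfold idx in e. lia.
Qed.
Lemma Lseq_L {X : TopSpace} (x : X) b n : Lseq x b (idx n 0) = rev (b n).
Proof. unfold Lseq. rewrite rlev_idx by (pose proof (pow2_pos n); lia). rewrite Nat.eqb_refl. auto. Qed.
Lemma Lseq_nL {X : TopSpace} (x : X) b n k : (k < 2 ^ n)%nat -> k <> 0%nat ->
  Lseq x b (idx n k) = const_path x.
Proof.
  intros Hk Hne. unfold Lseq. rewrite rlev_idx by auto.
  destruct (Nat.eqb_spec (idx n k) (idx n 0)); auto.
  exfalso. unfold idx in e. pose proof (pow2_pos n). lia.
Qed.

Lemma null_Rseq {X : TopSpace} (x : X) a : null_seq x a -> null_seq x (Rseq x a).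
Proof.
  intros [La Na]. split.
  - intros i. unfold Rseq. destruct Nat.eqb; auto using const_loop.
  - intros U HU Ux. destruct (Na U HU Ux) as [N HN]. exists (2 ^ N)%nat. intros i Hi t Ht.
    destruct (idx_surj i) as [n [k [Hk ->]]].
    destruct (Nat.eq_dec k (2 ^ n - 1)) as [->|Ne].
    + rewrite Rseq_R. apply HN; auto. eapply lev_ge; [apply pow2_m1|eauto].
    + rewrite Rseq_nR; auto.
Qed.

Lemma null_Lseq {X : TopSpace} (x : X) b : null_seq x b -> null_seq x (Lseq x b).
Proof.
  intros [La Na]. split.
  - intros i. unfold Lseq. destruct Nat.eqb; auto using const_loop, rev_loop.
  - intros U HU Ux. destruct (Na U HU Ux) as [N HN]. exists (2 ^ N)%nat. intros i Hi t Ht.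
    destruct (idx_surj i) as [n [k [Hk ->]]].
    destruct (Nat.eq_dec k 0) as [->|Ne].
    + rewrite Lseq_L. unfold rev. apply HN; [|unfold I01 in *; lra]. eapply lev_ge; eauto.
    + rewrite Lseq_nL; auto.
Qed.

Lemma tau_aff {X : TopSpace} (x : X) s p n k u : IsTauProd x s p -> (k < 2 ^ n)%nat -> I01 u ->
  p (Ileft n k + u / 3 ^ (n + 1)) = s (idx n k) u.
Proof.
  intros Hp Hk Hu. pose proof (pow3_pos (n+1)). rewrite (tau_val x s p n k); auto.
  - f_equal. field. lra.
  - rewrite Ilen. unfold I01 in Hu. split.
    assert (0 <= u / 3 ^ (n+1)) by (apply Rdiv_le_0_compat; lra). lra.
    unfold Rdiv. assert (u * / 3 ^ (n + 1) <= 1 * / 3 ^ (n + 1)).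
    { apply Rmult_le_compat_r; [left; apply Rinv_0_lt_compat|]; lra. } lra.
Qed.

Lemma tau_ends {X : TopSpace} (x : X) s p n k : (forall i, is_loop x (s i)) -> IsTauProd x s p ->
  (k < 2 ^ n)%nat -> p (Ileft n k) = x /\ p (Iright n k) = x.
Proof.
  intros Ls Hp Hk. destruct (Ls (idx n k)) as [_ [A0 A1]]. split.
  - replace (Ileft n k) with (Ileft n k + 0 / 3 ^ (n+1)) by (unfold Rdiv; ring).
    rewrite (tau_aff x s p n k 0); auto.
  - rewrite Ilen. replace (Ileft n k + / 3 ^ (n+1)) with (Ileft n k + 1 / 3 ^ (n+1)) by (unfold Rdiv; ring).
    rewrite (tau_aff x s p n k 1); auto.
Qed.

Lemma inf_aff {X : TopSpace} (x : X) s q k u : IsInfProd x s q -> I01 u ->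
  q (slotL k + (slotR k - slotL k) * u) = s k u.
Proof.
  intros Hq Hu. pose proof (slotL_lt k).
  rewrite (inf_val x s q k _ Hq); [|unfold I01 in Hu; split; nra].
  f_equal. unfold inf_par. rewrite slot_len. pose proof (slot_pos k).
  field. split; intro E; rewrite E in H0; lra.
Qed.

Lemma G_not_R n m t : bs n <= t <= mid n -> Ileft m (2 ^ m - 1) < t < Iright m (2 ^ m - 1) -> False.
Proof.
  intros T1 T2. destruct (Rchain m) as [A B]. rewrite A, B in T2. unfold bs, mid in T1.
  destruct (le_lt_dec n m).
  - assert (3 ^ (n+1) <= 3 ^ (m+1)) by (apply Rle_pow; [lra|lia]).
    pose proof (pow3_pos (n+1)).
    assert (2 / 3 ^ (m+1) <= 2 / 3 ^ (n+1)).
    { unfold Rdiv. apply Rmult_le_compat_l; [lra|]. apply Rinv_le_contravar; lra. } lra.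
  - assert (3 ^ (m+1) <= 3 ^ n) by (apply Rle_pow; [lra|lia]).
    pose proof (pow3_pos (m+1)).
    assert (/ 3 ^ n <= / 3 ^ (m+1)) by (apply Rinv_le_contravar; lra). lra.
Qed.

Lemma G_not_L n m t : 2 / 3 ^ (n + 1) <= t <= / 3 ^ n -> Ileft m 0 < t < Iright m 0 -> False.
Proof.
  intros T1 T2. destruct (Lchain m) as [A B]. rewrite A, B in T2.
  destruct (le_lt_dec n m).
  - assert (3 ^ (n+1) <= 3 ^ (m+1)) by (apply Rle_pow; [lra|lia]).
    pose proof (pow3_pos (n+1)).
    assert (2 / 3 ^ (m+1) <= 2 / 3 ^ (n+1)).
    { unfold Rdiv. apply Rmult_le_compat_l; [lra|]. apply Rinv_le_contravar; lra. } lra.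
  - assert (3 ^ (m+1) <= 3 ^ n) by (apply Rle_pow; [lra|lia]).
    pose proof (pow3_pos (m+1)).
    assert (/ 3 ^ n <= / 3 ^ (m+1)) by (apply Rinv_le_contravar; lra). lra.
Qed.

Lemma tau_x_gen {X : TopSpace} (x : X) s p t : IsTauProd x s p -> I01 t ->
  (forall m k, (k < 2 ^ m)%nat -> Ileft m k < t < Iright m k -> s (idx m k) = const_path x) -> p t = x.
Proof.
  intros Hp Ht H.
  destruct (classic (exists m k, (k < 2 ^ m)%nat /\ Ileft m k < t < Iright m k)) as [[m [k [Hk T]]]|N].
  - rewrite (tau_val x s p m k t Hp Hk) by lra. rewrite H; auto.
  - apply (tau_x x s p t Hp Ht). intros m k Hk T; apply N; eauto.
Qed.

Lemma Rrel {X : TopSpace} (x : X) a p q : null_seq x a ->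
  IsTauProd x (Rseq x a) p -> IsInfProd x a q -> forall t, I01 t -> p t = q (h1 t).
Proof.
  intros Na Hp Hq t Ht. pose proof (proj1 Na) as La.
  destruct (Req_dec t 1) as [->|Ne].
  { unfold h1. rewrite BF_1 by apply h1_ok. rewrite (tau_1 x _ p Hp). destruct Hq as [_ ->]; auto. }
  destruct (block_exists t) as [n Hn]; [unfold I01 in *; lra|].
  destruct (block_facts n) as [[F1 F2] [F3 [F4 [F5 _]]]].
  destruct (Rle_dec t (mid n)).
  - unfold h1. rewrite (BF_G _ _ _ n t h1_ok) by lra. rewrite Rminus_diag, Rmult_0_l, Rplus_0_r.
    replace (slotL n) with (slotL n + (slotR n - slotL n) * 0) by ring.
    rewrite (inf_aff x a q n 0 Hq I01_0). destruct (La n) as [_ [-> _]].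
    apply (tau_x_gen x _ p t Hp Ht). intros m k Hk T.
    destruct (Nat.eq_dec k (2 ^ m - 1)) as [->|Nk].
    + exfalso. apply (G_not_R n m t); auto. lra.
    + apply Rseq_nR; auto.
  - unfold h1. rewrite (BF_R _ _ _ n t h1_ok) by lra.
    set (u := (t - mid n) * 3 ^ (n + 1)).
    assert (Hu : I01 u) by (apply par_I01; lra).
    rewrite (inf_aff x a q n u Hq Hu).
    replace t with (Ileft n (2 ^ n - 1) + u / 3 ^ (n + 1)).
    + rewrite (tau_aff x _ p n _ u Hp (pow2_m1 n) Hu). rewrite Rseq_R; auto.
    + destruct (Rchain n) as [A _]. rewrite A. unfold u, mid. field. pose proof (pow3_pos (n+1)); lra.
Qed.

Lemma Lrel {X : TopSpace} (x : X) b p q : null_seq x b ->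
  IsTauProd x (Lseq x b) p -> IsInfProd x b q -> forall t, I01 t -> p t = q (h1 (1 - t)).
Proof.
  intros Nb Hp Hq t Ht. pose proof (proj1 Nb) as Lb.
  destruct (Req_dec t 0) as [->|Ne].
  { unfold h1. rewrite Rminus_0_r, BF_1 by apply h1_ok. rewrite (tau_0 x _ p Hp). destruct Hq as [_ ->]; auto. }
  destruct (block_exists (1 - t)) as [n Hn]; [unfold I01 in *; lra|].
  destruct (block_facts n) as [[F1 F2] [F3 [F4 [F5 _]]]].
  destruct (Rle_dec (1 - t) (mid n)).
  - unfold h1. rewrite (BF_G _ _ _ n (1 - t) h1_ok) by lra. rewrite Rminus_diag, Rmult_0_l, Rplus_0_r.
    replace (slotL n) with (slotL n + (slotR n - slotL n) * 0) by ring.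
    rewrite (inf_aff x b q n 0 Hq I01_0). destruct (Lb n) as [_ [-> _]].
    apply (tau_x_gen x _ p t Hp Ht). intros m k Hk T.
    destruct (Nat.eq_dec k 0) as [->|Nk].
    + exfalso. apply (G_not_L n m t); auto. unfold bs, mid in *. lra.
    + apply Lseq_nL; auto.
  - unfold h1. rewrite (BF_R _ _ _ n (1 - t) h1_ok) by lra.
    set (u := (1 - t - mid n) * 3 ^ (n + 1)).
    assert (Hu : I01 u) by (apply par_I01; lra).
    rewrite (inf_aff x b q n u Hq Hu).
    assert (Hu' : I01 (1 - u)) by (destruct Hu; split; lra).
    replace t with (Ileft n 0 + (1 - u) / 3 ^ (n + 1)).
    + rewrite (tau_aff x _ p n 0 (1 - u) Hp ltac:(pose proof (pow2_pos n); lia) Hu').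
      rewrite Lseq_L. unfold rev. f_equal. ring.
    + destruct (Lchain n) as [A _]. rewrite A. unfold u, mid. field. pose proof (pow3_pos (n+1)); lra.
Qed.

Definition Dseq {X : TopSpace} (x : X) (a : nat -> R -> X) (p : R -> X) (j : nat) : R -> X :=
  if Nat.even j then (fun u => p (bs (Nat.div2 j) + u / 3 ^ (Nat.div2 j + 1)))
  else a (idx (Nat.div2 j) (2 ^ Nat.div2 j - 1)).

Lemma Dseq_even {X : TopSpace} (x : X) a p n : Dseq x a p (2 * n) = (fun u => p (bs n + u / 3 ^ (n + 1))).
Proof. unfold Dseq. rewrite Nat.even_even, Nat.div2_double. auto. Qed.
Lemma Dseq_odd {X : TopSpace} (x : X) a p n : Dseq x a p (2 * n + 1) = a (idx n (2 ^ n - 1)).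
Proof. unfold Dseq. rewrite Nat.even_odd, Nat.div2_odd'. auto. Qed.

Lemma Drel {X : TopSpace} (x : X) a p q : null_seq x a ->
  IsTauProd x a p -> IsInfProd x (Dseq x a p) q -> forall t, I01 t -> p t = q (h2 t).
Proof.
  intros Na Hp Hq t Ht. pose proof (proj1 Na) as La.
  destruct (Req_dec t 1) as [->|Ne].
  { unfold h2. rewrite BF_1 by apply h2_ok. rewrite (tau_1 x _ p Hp). destruct Hq as [_ ->]; auto. }
  destruct (block_exists t) as [n Hn]; [unfold I01 in *; lra|].
  destruct (block_facts n) as [[F1 F2] [F3 [F4 [F5 _]]]].
  destruct (Rle_dec t (mid n)).
  - unfold h2. rewrite (BF_G _ _ _ n t h2_ok) by lra.
    set (u := (t - bs n) * 3 ^ (n + 1)).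
    assert (Hu : I01 u) by (apply par_I01; lra).
    replace (slotL (2 * n + 1)) with (slotR (2 * n)) by (rewrite slotR_L; f_equal; lia).
    rewrite (inf_aff x _ q (2 * n) u Hq Hu). rewrite Dseq_even. f_equal.
    unfold u. field. pose proof (pow3_pos (n+1)); lra.
  - unfold h2. rewrite (BF_R _ _ _ n t h2_ok) by lra.
    set (u := (t - mid n) * 3 ^ (n + 1)).
    assert (Hu : I01 u) by (apply par_I01; lra).
    replace (slotL (2 * n + 2)) with (slotR (2 * n + 1)) by (rewrite slotR_L; f_equal; lia).
    rewrite (inf_aff x _ q (2 * n + 1) u Hq Hu). rewrite Dseq_odd.
    replace t with (Ileft n (2 ^ n - 1) + u / 3 ^ (n + 1)).
    + rewrite (tau_aff x _ p n _ u Hp (pow2_m1 n) Hu). auto.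
    + destruct (Rchain n) as [A _]. rewrite A. unfold u, mid. field. pose proof (pow3_pos (n+1)); lra.
Qed.

Lemma open_level n k t m : (k < 2 ^ n)%nat -> Ileft n k < t < Iright n k -> bs m <= t -> (m <= n)%nat.
Proof.
  intros Hk T Hm. pose proof (Iright_le n k Hk). unfold bs in Hm.
  destruct (le_lt_dec m n); auto. exfalso.
  assert (3 ^ (n+1) <= 3 ^ m) by (apply Rle_pow; [lra|lia]).
  pose proof (pow3_pos (n+1)).
  assert (/ 3 ^ m <= / 3 ^ (n+1)) by (apply Rinv_le_contravar; lra). lra.
Qed.

Lemma null_Dseq {X : TopSpace} (x : X) a p : null_seq x a -> IsTauProd x a p -> null_seq x (Dseq x a p).
Proof.
  intros Na Hp. pose proof (proj1 Na) as La. split.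
  - intros j. destruct (Nat.Even_or_Odd j) as [[n ->]|[n ->]].
    + rewrite Dseq_even. destruct (block_facts n) as [[F1 F2] [F3 [F4 [F5 [F6 F7]]]]].
      pose proof (pow3_pos (n+1)). repeat split.
      * apply (cont01_comp p (fun u => bs n + u / 3 ^ (n+1))).
        { apply (tau_cont x a p Na Hp). }
        { replace (fun u => bs n + u / 3 ^ (n+1)) with (fun u => (/ 3 ^ (n+1)) * u + bs n)
            by (apply functional_extensionality; intros; field; lra). apply cont1_lin. }
        { intros u Hu. unfold I01 in *. split. assert (0 <= u / 3 ^ (n+1)) by (apply Rdiv_le_0_compat; lra). lra.
          assert (u / 3 ^ (n+1) <= / 3 ^ (n+1)).
          { unfold Rdiv. rewrite <- (Rmult_1_l (/ 3 ^ (n+1))) at 2. apply Rmult_le_compat_r; [left; apply Rinv_0_lt_compat|]; lra. }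
          lra. }
      * replace (bs n + 0 / 3 ^ (n + 1)) with (bs n) by (unfold Rdiv; ring).
        destruct n as [|m].
        { rewrite bs_0. apply (tau_0 x a p Hp). }
        { destruct (block_facts m) as [_ [_ [_ [E _]]]]. rewrite <- E.
          destruct (Rchain m) as [_ B]. unfold be. rewrite <- B. apply (tau_ends x a p m _ La Hp (pow2_m1 m)). }
      * replace (bs n + 1 / 3 ^ (n + 1)) with (mid n) by (unfold Rdiv; lra).
        destruct (Rchain n) as [A _]. unfold mid. rewrite <- A. apply (tau_ends x a p n _ La Hp (pow2_m1 n)).
    + rewrite Dseq_odd. auto.
  - intros U HU Ux. destruct (proj2 Na U HU Ux) as [N HN]. exists (2 * N)%nat. intros j Hj u Hu.
    destruct (Nat.Even_or_Odd j) as [[n ->]|[n ->]].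
    + rewrite Dseq_even.
      destruct (block_facts n) as [[F1 F2] [F3 [F4 [F5 [F6 F7]]]]].
      assert (U0 : 0 <= u / 3 ^ (n+1) <= / 3 ^ (n+1)).
      { split. apply Rdiv_le_0_compat; [unfold I01 in *; lra| apply pow3_pos].
        unfold Rdiv. rewrite <- (Rmult_1_l (/ 3 ^ (n+1))) at 2.
        apply Rmult_le_compat_r; [left; apply Rinv_0_lt_compat; apply pow3_pos|unfold I01 in *; lra]. }
      set (t := bs n + u / 3 ^ (n + 1)).
      assert (Tb : bs n <= t) by (unfold t; lra).
      destruct (classic (exists m k, (k < 2 ^ m)%nat /\ Ileft m k < t < Iright m k)) as [[m [k [Hk T]]]|NT].
      * rewrite (tau_val x a p m k t Hp Hk) by lra. apply HN.
        { pose proof (open_level m k t n Hk T Tb). pose proof (idx_ge m k). lia. }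
        apply par_I01. rewrite <- Ilen. lra.
      * assert (It : I01 t).
        { unfold t. split; lra. }
        rewrite (tau_x x a p t Hp It); auto. intros m k Hk T; apply NT; eauto.
    + rewrite Dseq_odd. apply HN; auto. pose proof (idx_ge n (2 ^ n - 1)). lia.
Qed.

Lemma least_ex (P : nat -> Prop) k : (exists m, (k <= m)%nat /\ P m) ->
  exists m, (k <= m)%nat /\ P m /\ forall m', (k <= m')%nat -> P m' -> (m <= m')%nat.
Proof.
  intros [m0 [H0 P0]]. apply NNPP. intros Hn.
  assert (forall m, ~ ((k <= m)%nat /\ P m)).
  { intros m. induction m as [m IH] using (well_founded_induction lt_wf).
    intros [Hk Pm]. apply Hn. exists m. repeat split; auto.
    intros m' Hk' Pm'. destruct (le_lt_dec m m'); auto. exfalso; apply (IH m'); auto. }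
  apply (H m0); auto.
Qed.

Lemma enum_exists (P : nat -> Prop) : (forall n, exists m, (n <= m)%nat /\ P m) ->
  exists e : nat -> nat, (forall n, P (e n)) /\ (forall n m, (n < m)%nat -> (e n < e m)%nat) /\
    (forall m, P m -> exists n, e n = m).
Proof.
  intros Inf.
  assert (Hnx : forall k, { m | (k <= m)%nat /\ P m /\ forall m', (k <= m')%nat -> P m' -> (m <= m')%nat }).
  { intros k. apply constructive_indefinite_description. apply least_ex. apply Inf. }
  set (nx k := proj1_sig (Hnx k)).
  assert (Nx : forall k, (k <= nx k)%nat /\ P (nx k) /\ forall m', (k <= m')%nat -> P m' -> (nx k <= m')%nat).
  { intros k. unfold nx. destruct (Hnx k); auto. }
  set (e := fix e n := match n with O => nx O | S n => nx (S (e n)) end).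
  assert (Es : forall n, (e n < e (S n))%nat) by (intros n; simpl; destruct (Nx (S (e n))); lia).
  assert (Mono : forall n m, (n < m)%nat -> (e n < e m)%nat).
  { intros n m H. induction H. apply Es. pose proof (Es m). lia. }
  exists e. split; [|split]; auto.
  - intros n; destruct n; simpl; apply Nx.
  - intros m Pm.
    assert (G : forall n, (exists n', e n' = m) \/ (e n <= m)%nat).
    { induction n.
      - right. simpl. apply Nx; auto; lia.
      - destruct IHn as [?|IH]; auto. destruct (Nat.eq_dec (e n) m) as [<-|Ne]; eauto.
        right. simpl. apply Nx; auto. lia. }
    assert (forall n, (n <= e n)%nat).
    { induction n. lia. pose proof (Es n). lia. }
    destruct (G (S m)) as [?|C]; auto. pose proof (H (S m)). lia.
Qed.

Definition bijective_nat' := bijective_nat.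

Lemma bij_ext (A B : nat -> Prop) (sA sB : nat -> nat) :
  (forall k k', sA k = sA k' -> k = k') -> (forall k k', sB k = sB k' -> k = k') ->
  (forall i, A i <-> exists k, sA k = i) -> (forall i, B i <-> exists k, sB k = i) ->
  (forall n, exists m, (n <= m)%nat /\ ~ A m) -> (forall n, exists m, (n <= m)%nat /\ ~ B m) ->
  exists phi, bijective_nat phi /\ (forall k, phi (sA k) = sB k) /\ (forall i, ~ A i -> ~ B (phi i)).
Proof.
  intros IA IB HA HB CA CB.
  destruct (enum_exists (fun m => ~ A m) CA) as [eA [EA1 [EA2 EA3]]].
  destruct (enum_exists (fun m => ~ B m) CB) as [eB [EB1 [EB2 EB3]]].
  assert (eAinj : forall n m, eA n = eA m -> n = m).
  { intros n m E. destruct (lt_eq_lt_dec n m) as [[L|L]|L]; auto; apply EA2 in L; lia. }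
  assert (eBinj : forall n m, eB n = eB m -> n = m).
  { intros n m E. destruct (lt_eq_lt_dec n m) as [[L|L]|L]; auto; apply EB2 in L; lia. }
  set (invA i := match excluded_middle_informative (exists n, eA n = i) with
                 | left H => proj1_sig (constructive_indefinite_description _ H) | right _ => O end).
  assert (InvA : forall n, invA (eA n) = n).
  { intros n. unfold invA. destruct excluded_middle_informative as [H|H].
    - destruct (constructive_indefinite_description _ H) as [m Hm]. simpl. auto.
    - exfalso; eauto. }
  set (pA i := match excluded_middle_informative (exists k, sA k = i) with
               | left H => proj1_sig (constructive_indefinite_description _ H) | right _ => O end).
  assert (PA : forall k, pA (sA k) = k).
  { intros k. unfold pA. destruct excluded_middle_informative as [H|H].
    - destruct (constructive_indefinite_description _ H) as [m Hm]. simpl. auto.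
    - exfalso; eauto. }
  set (phi i := if excluded_middle_informative (A i) then sB (pA i) else eB (invA i)).
  assert (Phi1 : forall k, phi (sA k) = sB k).
  { intros k. unfold phi. destruct excluded_middle_informative as [H|H].
    - rewrite PA; auto.
    - exfalso; apply H, HA; eauto. }
  assert (Phi2 : forall i, ~ A i -> phi i = eB (invA i)).
  { intros i H. unfold phi. destruct excluded_middle_informative; tauto. }
  exists phi. split; [split|split]; auto.
  - intros i j E.
    destruct (classic (A i)) as [Ai|Ai]; destruct (classic (A j)) as [Aj|Aj].
    + apply HA in Ai as [k <-]. apply HA in Aj as [k' <-]. rewrite !Phi1 in E. f_equal; auto.
    + exfalso. apply HA in Ai as [k <-]. rewrite Phi1, Phi2 in E by auto.
      apply (EB1 (invA j)). apply HB. eauto.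
    + exfalso. apply HA in Aj as [k <-]. rewrite Phi1, Phi2 in E by auto.
      apply (EB1 (invA i)). apply HB. eauto.
    + rewrite !Phi2 in E by auto. apply eBinj in E.
      destruct (EA3 i Ai) as [n <-]. destruct (EA3 j Aj) as [m <-]. rewrite !InvA in E. subst; auto.
  - intros m. destruct (classic (B m)) as [Bm|Bm].
    + apply HB in Bm as [k <-]. exists (sA k). auto.
    + destruct (EB3 m Bm) as [n <-]. exists (eA n). rewrite Phi2 by auto. rewrite InvA; auto.
  - intros i Ai. rewrite Phi2 by auto. apply EB1.
Qed.

Lemma inj_tail (phi : nat -> nat) : (forall i j, phi i = phi j -> i = j) ->
  forall N, exists M, forall i, (M <= i)%nat -> (N <= phi i)%nat.
Proof.
  intros Inj N. induction N.
  - exists O; intros; lia.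
  - destruct IHN as [M HM]. destruct (classic (exists i0, phi i0 = N)) as [[i0 Hi0]|No].
    + exists (Nat.max M (S i0)). intros i Hi. specialize (HM i ltac:(lia)).
      destruct (Nat.eq_dec (phi i) N); [|lia]. rewrite <- Hi0 in e. apply Inj in e. lia.
    + exists M. intros i Hi. specialize (HM i Hi). destruct (Nat.eq_dec (phi i) N); [|lia].
      exfalso; eauto.
Qed.

Lemma null_comp {X : TopSpace} (x : X) s phi : null_seq x s -> (forall i j, phi i = phi j -> i = j) ->
  null_seq x (fun i => s (phi i)).
Proof.
  intros [Ls Ns] Inj. split; auto.
  intros U HU Ux. destruct (Ns U HU Ux) as [N HN]. destruct (inj_tail phi Inj N) as [M HM].
  exists M. intros; apply HN; auto.
Qed.

Lemma null_mix {X : TopSpace} (x : X) a b (P : nat -> bool) : null_seq x a -> null_seq x b ->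
  null_seq x (fun i => if P i then b i else a i).
Proof.
  intros [La Na] [Lb Nb]. split. intros i; destruct (P i); auto.
  intros U HU Ux. destruct (Na U HU Ux) as [N1 H1]. destruct (Nb U HU Ux) as [N2 H2].
  exists (Nat.max N1 N2). intros n Hn t Ht. destruct (P n); [apply H2|apply H1]; auto; lia.
Qed.

Lemma h1_facts : cont1 h1 /\ into01 h1 /\ h1 0 = 0 /\ h1 1 = 1.
Proof.
  destruct (BF_cont _ _ _ h1_ok) as [C I]. split; [auto|split; [auto|split]].
  apply BF_0, h1_ok. apply BF_1, h1_ok.
Qed.
Lemma h2_facts : cont1 h2 /\ into01 h2 /\ h2 0 = 0 /\ h2 1 = 1.
Proof.
  destruct (BF_cont _ _ _ h2_ok) as [C I]. split; [auto|split; [auto|split]].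
  apply BF_0, h2_ok. apply BF_1, h2_ok.
Qed.

Lemma reparam_ext {X : TopSpace} (p P : R -> X) (h : R -> R) :
  cont01 P -> cont1 h -> into01 h -> h 0 = 0 -> h 1 = 1 ->
  (forall t, I01 t -> p t = P (h t)) -> phtpy p P.
Proof.
  intros CP Ch Ih H0 H1 E. apply (phtpy_ext (fun t => P (h t)) P); auto.
  intros; symmetry; auto. apply reparam; auto.
Qed.

Lemma claim1 {X : TopSpace} (x : X) : wd_transf_products x -> wd_inf_products x.
Proof.
  intros WT a b Na Nb Hab p q Hp Hq.
  pose proof (null_Rseq x a Na) as NRa. pose proof (null_Rseq x b Nb) as NRb.
  pose proof (TauF_spec x _ (proj1 NRa)) as Ta. pose proof (TauF_spec x _ (proj1 NRb)) as Tb.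
  assert (W : phtpy (TauF x (Rseq x a)) (TauF x (Rseq x b))).
  { apply (WT _ _ NRa NRb); auto. intros i. unfold Rseq. destruct Nat.eqb; auto.
    apply phtpy_refl, (loop_cont x), const_loop. }
  destruct h1_facts as [C [I [E0 E1]]].
  apply phtpy_trans with (TauF x (Rseq x a)).
  { apply phtpy_sym. apply (reparam_ext _ _ h1); auto. apply (inf_cont x a p Na Hp).
    intros; apply (Rrel x a); auto. }
  apply phtpy_trans with (TauF x (Rseq x b)); auto.
  apply (reparam_ext _ _ h1); auto. apply (inf_cont x b q Nb Hq).
  intros; apply (Rrel x b); auto.
Qed.

Lemma lemmaL {X : TopSpace} (x : X) a m p q : wd_inf_products x -> null_seq x a -> null_seq x m ->
  (forall i, phtpy (a i) (m i)) ->
  (forall n k, (k < 2 ^ n)%nat -> k <> (2 ^ n - 1)%nat -> a (idx n k) = m (idx n k)) ->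
  IsTauProd x a p -> IsTauProd x m q -> phtpy p q.
Proof.
  intros WI Na Nm Ham Eq Hp Hq.
  pose proof (null_Dseq x a p Na Hp) as NDa. pose proof (null_Dseq x m q Nm Hq) as NDm.
  pose proof (InfF_spec x _ (proj1 NDa)) as IA. pose proof (InfF_spec x _ (proj1 NDm)) as IM.
  assert (W : phtpy (InfF x (Dseq x a p)) (InfF x (Dseq x m q))).
  { apply (WI _ _ NDa NDm); auto. intros j.
    destruct (Nat.Even_or_Odd j) as [[n ->]|[n ->]].
    - apply (phtpy_ext (Dseq x a p (2 * n)) (Dseq x a p (2 * n))).
      + auto.
      + intros u Hu. rewrite !Dseq_even.
        set (t := bs n + u / 3 ^ (n + 1)).
        assert (U0 : 0 <= u / 3 ^ (n+1) <= / 3 ^ (n+1)).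
        { split. apply Rdiv_le_0_compat; [unfold I01 in *; lra| apply pow3_pos].
          unfold Rdiv. rewrite <- (Rmult_1_l (/ 3 ^ (n+1))) at 2.
          apply Rmult_le_compat_r; [left; apply Rinv_0_lt_compat; apply pow3_pos|unfold I01 in *; lra]. }
        destruct (block_facts n) as [[F1 F2] [F3 [F4 [F5 [F6 F7]]]]].
        assert (Tt : bs n <= t <= mid n) by (unfold t; lra).
        assert (It : I01 t) by (unfold I01; lra).
        destruct (classic (exists n' k', (k' < 2 ^ n')%nat /\ Ileft n' k' < t < Iright n' k')) as [[n' [k' [Hk T]]]|NT].
        * rewrite (tau_val x a p n' k' t Hp Hk), (tau_val x m q n' k' t Hq Hk) by lra.
          rewrite Eq; auto. intros ->. apply (G_not_R n n' t); auto.
        * rewrite (tau_x x a p t Hp It), (tau_x x m q t Hq It); auto;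
            intros n' k' Hk T; apply NT; eauto.
      + apply phtpy_refl, (loop_cont x), (proj1 NDa).
    - rewrite !Dseq_odd. auto. }
  destruct h2_facts as [C [I [E0 E1]]].
  apply phtpy_trans with (InfF x (Dseq x a p)).
  { apply (reparam_ext _ _ h2); auto. apply (inf_cont x _ _ NDa IA). intros; apply (Drel x a); auto. }
  apply phtpy_trans with (InfF x (Dseq x m q)); auto.
  apply phtpy_sym. apply (reparam_ext _ _ h2); auto. apply (inf_cont x _ _ NDm IM). intros; apply (Drel x m); auto.
Qed.

Definition rr (k : nat) : nat := idx k (2 ^ k - 1).

Lemma rr_inj k k' : rr k = rr k' -> k = k'.
Proof. intros E. apply idx_inj in E; try apply pow2_m1. tauto. Qed.

Lemma notR_inf n : exists m, (n <= m)%nat /\ ~ (exists k, rr k = m).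
Proof.
  exists (idx (S n) 0). split. pose proof (idx_ge (S n) 0). lia.
  intros [k E]. unfold rr in E. apply idx_inj in E; [|apply pow2_m1|pose proof (pow2_pos (S n)); lia].
  destruct E as [E1 E]. subst. simpl in E. pose proof (pow2_pos n). lia.
Qed.

Lemma even_false i : ~ (exists k, (2 * k)%nat = i) -> Nat.even i = false.
Proof.
  intros H. destruct (Nat.Even_or_Odd i) as [[k ->]|[k ->]].
  - exfalso; eauto.
  - rewrite Nat.even_odd; auto.
Qed.
Lemma even_true i : ~ (exists k, (2 * k + 1)%nat = i) -> Nat.even i = true.
Proof.
  intros H. destruct (Nat.Even_or_Odd i) as [[k ->]|[k ->]].
  - rewrite Nat.even_even; auto.
  - exfalso; eauto.
Qed.

Lemma claim2 {X : TopSpace} (x : X) : transf_pi1_comm x -> wd_inf_products x -> wd_transf_products x.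
Proof.
  intros TC WI a b Na Nb Hab p q Hp Hq.
  destruct (bij_ext (fun i => exists k, rr k = i) (fun i => exists k, (2 * k)%nat = i) rr (fun k => (2 * k)%nat))
    as [phi1 [B1 [P1a P1b]]].
  { apply rr_inj. } { intros; lia. } { tauto. } { tauto. } { apply notR_inf. }
  { intros n. exists (2 * n + 1)%nat. split; [lia|]. intros [k E]. lia. }
  destruct (bij_ext (fun i => exists k, rr k = i) (fun i => exists k, (2 * k + 1)%nat = i) rr (fun k => (2 * k + 1)%nat))
    as [phi2 [B2 [P2a P2b]]].
  { apply rr_inj. } { intros; lia. } { tauto. } { tauto. } { apply notR_inf. }
  { intros n. exists (2 * n)%nat. split; [lia|]. intros [k E]. lia. }
  set (m := fun i => if Nat.even i then b i else a i).
  assert (Nm : null_seq x m) by (apply null_mix; auto).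
  assert (Li : forall s phi, null_seq x s -> bijective_nat phi -> null_seq x (fun i => s (phi i))).
  { intros s phi Ns [I _]. apply null_comp; auto. }
  assert (Ex : forall s, null_seq x s -> IsTauProd x s (TauF x s)) by (intros s Ns; apply TauF_spec, Ns).
  assert (RefL : forall i, phtpy (a i) (a i)) by (intros; apply phtpy_refl, (loop_cont x), (null_loop x a i Na)).
  assert (RefLb : forall i, phtpy (b i) (b i)) by (intros; apply phtpy_refl, (loop_cont x), (null_loop x b i Nb)).
  assert (NotR : forall n k, (k < 2 ^ n)%nat -> k <> (2 ^ n - 1)%nat -> ~ (exists k0, rr k0 = idx n k)).
  { intros n k Hk Hne [k0 E]. unfold rr in E. apply idx_inj in E; auto using pow2_m1. destruct E; subst; lia. }
  apply phtpy_trans with (TauF x (fun i => a (phi1 i))).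
  { apply (TC a phi1 Na B1); auto. }
  apply phtpy_trans with (TauF x (fun i => m (phi1 i))).
  { apply (lemmaL x (fun i => a (phi1 i)) (fun i => m (phi1 i)) _ _ WI); auto.
    - intros i. unfold m. destruct (Nat.even (phi1 i)); auto.
    - intros n k Hk Hne. unfold m. rewrite even_false; [reflexivity|apply P1b, NotR; auto]. }
  apply phtpy_trans with (TauF x m).
  { apply phtpy_sym. apply (TC m phi1 Nm B1); auto. }
  apply phtpy_trans with (TauF x (fun i => m (phi2 i))).
  { apply (TC m phi2 Nm B2); auto. }
  apply phtpy_trans with (TauF x (fun i => b (phi2 i))).
  { apply (lemmaL x (fun i => m (phi2 i)) (fun i => b (phi2 i)) _ _ WI); auto.
    - intros i. unfold m. destruct (Nat.even (phi2 i)); auto.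
    - intros n k Hk Hne. unfold m. rewrite even_true; [reflexivity|apply P2b, NotR; auto]. }
  apply phtpy_sym. apply (TC b phi2 Nb B2); auto.
Qed.

Definition rho (i : nat) : nat := (i + 2 ^ S (rlev i))%nat.
Definition lam (i : nat) : nat := (i + 2 ^ rlev i)%nat.

Lemma rho_idx n k : (k < 2 ^ n)%nat -> rho (idx n k) = idx (S n) (k + 2 ^ n).
Proof. intros Hk. unfold rho. rewrite rlev_idx by auto. unfold idx. simpl. pose proof (pow2_pos n). lia. Qed.
Lemma lam_idx n k : (k < 2 ^ n)%nat -> lam (idx n k) = idx (S n) k.
Proof. intros Hk. unfold lam. rewrite rlev_idx by auto. unfold idx. simpl. pose proof (pow2_pos n). lia. Qed.

Lemma tau_right {X : TopSpace} (x : X) s p : IsTauProd x s p ->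
  IsTauProd x (fun i => s (rho i)) (fun t => p (2/3 + t/3)).
Proof.
  intros Hp. split.
  - intros n k t Hk Ht. change (2 ^ n + k - 1)%nat with (idx n k). rewrite rho_idx by auto.
    rewrite (tau_val x s p (S n) (k + 2 ^ n)); auto.
    + f_equal. rewrite Ileft_hi, pow3_S by auto. field.
    + simpl; lia.
    + rewrite Ileft_hi, Iright_hi by auto. lra.
  - intros t Ht N. apply (tau_x x s p); [auto| unfold I01 in *; lra|].
    intros n' k' Hk' T. destruct n' as [|m].
    + simpl in Hk'. assert (k' = 0%nat) by lia. subst. destruct I00 as [A B]. unfold I01 in *; lra.
    + destruct (lt_pow2_S m k' Hk') as [H|[k0 [H ->]]].
      * pose proof (Iright_lo13 m k' H). unfold I01 in *; lra.
      * rewrite Ileft_hi, Iright_hi in T by auto. apply (N m k0 H). lra.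
Qed.

Lemma tau_left {X : TopSpace} (x : X) s p : IsTauProd x s p ->
  IsTauProd x (fun i => s (lam i)) (fun t => p (t/3)).
Proof.
  intros Hp. split.
  - intros n k t Hk Ht. change (2 ^ n + k - 1)%nat with (idx n k). rewrite lam_idx by auto.
    rewrite (tau_val x s p (S n) k); auto.
    + f_equal. rewrite Ileft_lo, pow3_S by auto. field.
    + simpl; lia.
    + rewrite Ileft_lo, Iright_lo by auto. lra.
  - intros t Ht N. apply (tau_x x s p); [auto| unfold I01 in *; lra|].
    intros n' k' Hk' T. destruct n' as [|m].
    + simpl in Hk'. assert (k' = 0%nat) by lia. subst. destruct I00 as [A B]. unfold I01 in *; lra.
    + destruct (lt_pow2_S m k' Hk') as [H|[k0 [H ->]]].
      * rewrite Ileft_lo, Iright_lo in T by auto. apply (N m k' H). lra.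
      * pose proof (Ileft_hi23 m k0 H). unfold I01 in *; lra.
Qed.

Lemma tau_mid {X : TopSpace} (x : X) s p u : IsTauProd x s p -> I01 u -> p (1/3 + u/3) = s O u.
Proof.
  intros Hp Hu. destruct I00 as [A _]. rewrite <- A.
  replace (u/3) with (u / 3 ^ (0 + 1)) by (simpl; f_equal; ring).
  apply (tau_aff x s p 0 0 u Hp); auto.
Qed.

Lemma Rseq_first_third {X : TopSpace} (x : X) b p t : IsTauProd x (Rseq x b) p -> 0 <= t <= 1/3 -> p t = x.
Proof.
  intros Hp Ht. apply (tau_x_gen x _ p t Hp); [unfold I01; lra|].
  intros m k Hk T. destruct m as [|m].
  - simpl in Hk. assert (k = 0%nat) by lia. subst. destruct I00 as [A B]. lra.
  - destruct (lt_pow2_S m k Hk) as [H|[k0 [H ->]]].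
    + apply Rseq_nR; auto. simpl. pose proof (pow2_pos m). lia.
    + pose proof (Ileft_hi23 m k0 H). lra.
Qed.

Definition sg (t : R) : R := clamp (5 * t + -1) - clamp (5 * t + -3).
Definition tg (t : R) : R := 1/3 + (-1/3) * clamp (5 * t + 0) + clamp (5 * t + -2) + (-1/3) * clamp (5 * t + -4).
Definition lg (t : R) : R := clamp (5 * t + -2) - clamp (5 * t + -4).

Ltac clampall := unfold sg, tg, lg, clamp, Rmax, Rmin in *; repeat destruct Rle_dec; try lra.

Lemma cont1_minus f g : cont1 f -> cont1 g -> cont1 (fun t => f t - g t).
Proof.
  intros Hf Hg. replace (fun t => f t - g t) with (fun t => f t + (-1) * g t)
    by (apply functional_extensionality; intros; ring).
  apply cont1_plus; auto. apply cont1_scal; auto.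
Qed.

Lemma sg_cont : cont1 sg.
Proof. unfold sg. apply cont1_minus; apply cont1_clamp_lin. Qed.
Lemma lg_cont : cont1 lg.
Proof. unfold lg. apply cont1_minus; apply cont1_clamp_lin. Qed.
Lemma tg_cont : cont1 tg.
Proof.
  unfold tg. repeat apply cont1_plus; try apply cont1_scal; try apply cont1_clamp_lin; apply cont1_const.
Qed.
Lemma sg_in : into01 sg. Proof. intros t Ht; unfold I01 in *; clampall. Qed.
Lemma tg_in : into01 tg. Proof. intros t Ht; unfold I01 in *; clampall. Qed.
Lemma lg_in : into01 lg. Proof. intros t Ht; unfold I01 in *; clampall. Qed.

Lemma claim3 {X : TopSpace} (x : X) : first_countable_at x -> wd_transf_products x -> homotopically_hausdorff x.
Proof.
  intros [B [HB1 HB2]] WT a La Hna.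
  apply NNPP; intro Hcon.
  assert (Hall : forall U, is_open X U -> U x -> exists b, is_loop x b /\ (forall t, I01 t -> U (b t)) /\ phtpy b a).
  { intros U HU Ux. apply NNPP; intro Hn. apply Hcon. exists U. repeat split; auto.
    intros b Lb Hb Hph. apply Hn; eauto. }
  set (Uf := fix Uf n := match n with O => B O | S n => fun z => Uf n z /\ B (S n) z end).
  assert (Uop : forall n, is_open X (Uf n) /\ Uf n x).
  { induction n; simpl. apply HB1. split. apply open_inter; [apply IHn|apply HB1]. split; [apply IHn|apply HB1]. }
  assert (Usub : forall n i, (i <= n)%nat -> forall z, Uf n z -> B i z).
  { induction n; intros i Hi z Hz. assert (i = 0%nat) by lia; subst; auto.
    destruct Hz as [Hz1 Hz2]. destruct (Nat.eq_dec i (S n)) as [->|Ne]; auto. apply (IHn i); auto; lia. }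
  assert (Ch : forall n, { b | is_loop x b /\ (forall t, I01 t -> Uf n (b t)) /\ phtpy b a }).
  { intros n. apply constructive_indefinite_description. apply Hall; apply Uop. }
  set (bb n := proj1_sig (Ch n)).
  assert (Hbb : forall n, is_loop x (bb n) /\ (forall t, I01 t -> Uf n (bb n t)) /\ phtpy (bb n) a).
  { intros n. unfold bb. destruct (Ch n); auto. }
  assert (Nbb : null_seq x bb).
  { split. intros n; apply Hbb. intros U HU Ux. destruct (HB2 U HU Ux) as [m Hm].
    exists m. intros n Hn t Ht. apply Hm. apply (Usub n); auto. apply Hbb; auto. }
  assert (Nbb' : null_seq x (fun n => bb (S n))) by (apply null_comp; auto; intros; lia).
  pose proof (null_Rseq x _ Nbb) as NR. pose proof (null_Rseq x _ Nbb') as NR'.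
  set (P := TauF x (Rseq x bb)).
  assert (HP : IsTauProd x (Rseq x bb) P) by (apply TauF_spec, NR).
  set (Q := fun t => P (2/3 + t/3)).
  assert (HQ : IsTauProd x (Rseq x (fun n => bb (S n))) Q).
  { apply (tau_seq_ext x (fun i => Rseq x bb (rho i))); [|apply tau_right; auto].
    intros i. destruct (idx_surj i) as [n [k [Hk ->]]]. rewrite rho_idx by auto.
    destruct (Nat.eq_dec k (2 ^ n - 1)) as [->|Ne].
    - replace (2 ^ n - 1 + 2 ^ n)%nat with (2 ^ S n - 1)%nat by (simpl; pose proof (pow2_pos n); lia).
      rewrite !Rseq_R. auto.
    - rewrite !Rseq_nR; auto. simpl; lia. simpl; lia. }
  assert (G : phtpy P Q).
  { apply (WT _ _ NR NR'); auto. intros i. unfold Rseq. destruct Nat.eqb.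
    - apply phtpy_trans with a. apply Hbb. apply phtpy_sym, Hbb.
    - apply phtpy_refl, (loop_cont x), const_loop. }
  assert (CQ : cont01 Q) by (apply (tau_cont x _ _ NR' HQ)).
  destruct G as [H [Hc [H0 [H1 He]]]].
  assert (P0 : P 0 = x) by (apply (tau_0 x _ _ HP)).
  assert (P1 : P 1 = x) by (apply (tau_1 x _ _ HP)).
  assert (Sq : phtpy (fun t => H ((fun _ => 0) t) (1/3 + t/3)) (fun t => H (sg t) (tg t))).
  { apply (square_lemma H (fun _ => 0) (fun t => 1/3 + t/3) sg tg); auto using sg_cont, tg_cont, sg_in, tg_in, cont1_const.
    - replace (fun t => 1/3 + t/3) with (fun t => /3 * t + 1/3) by (apply functional_extensionality; intros; field).
      apply cont1_lin.
    - intros t _; unfold I01; lra.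
    - intros t Ht; unfold I01 in *; lra.
    - clampall.
    - clampall.
    - clampall.
    - clampall. }
  assert (E0 : forall t, I01 t -> H ((fun _ => 0) t) (1/3 + t/3) = bb O t).
  { intros t Ht. cbv beta. rewrite H0 by (unfold I01 in *; lra). rewrite (tau_mid x _ _ t HP Ht).
    replace O with (idx 0 (2 ^ 0 - 1)) at 1 by reflexivity. rewrite Rseq_R. auto. }
  assert (Q0 : Q 0 = x).
  { unfold Q. replace (2/3 + 0/3) with (Iright 0 0) by (destruct I00; lra).
    destruct (tau_ends x _ _ 0 0 (proj1 NR) HP ltac:(simpl; lia)) as [_ E]; exact E. }
  assert (Q1 : Q 1 = x) by (unfold Q; replace (2/3 + 1/3) with 1 by field; auto).
  assert (E1 : forall t, I01 t -> H (sg t) (tg t) = Q (lg t)).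
  { intros t Ht. unfold I01 in Ht.
    destruct (Rle_dec t (1/5)).
    { replace (sg t) with 0 by clampall. replace (lg t) with 0 by clampall.
      rewrite H0 by (unfold I01; clampall). rewrite Q0. apply (Rseq_first_third x bb P); auto. clampall. }
    destruct (Rle_dec t (2/5)).
    { replace (tg t) with 0 by clampall. replace (lg t) with 0 by clampall.
      rewrite (proj1 (He (sg t) (sg_in t ltac:(unfold I01; lra)))). rewrite Q0; auto. }
    destruct (Rle_dec t (3/5)).
    { replace (sg t) with 1 by clampall. replace (lg t) with (tg t) by clampall.
      apply H1. apply tg_in; unfold I01; lra. }
    destruct (Rle_dec t (4/5)).
    { replace (tg t) with 1 by clampall. replace (lg t) with 1 by clampall.
      rewrite (proj2 (He (sg t) (sg_in t ltac:(unfold I01; lra)))). rewrite Q1; auto. }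
    { replace (sg t) with 0 by clampall. replace (lg t) with (3 * tg t - 2) by clampall.
      rewrite H0 by (unfold I01; clampall). unfold Q. f_equal. field. } }
  assert (Nul : phtpy (fun t => Q (lg t)) (fun _ => Q 0)).
  { apply reparam_null; auto using lg_cont, lg_in; clampall. }
  apply Hna. apply phtpy_trans with (bb O). apply phtpy_sym, Hbb.
  apply phtpy_trans with (fun t => H (sg t) (tg t)).
  { eapply phtpy_ext; [| |exact Sq]; auto. }
  apply phtpy_trans with (fun t => Q (lg t)).
  { apply phtpy_ext with (fun t => Q (lg t)) (fun t => Q (lg t)); auto.
    intros; symmetry; auto. apply phtpy_refl. apply (cont01_comp Q lg); auto using lg_cont, lg_in. }
  apply (phtpy_ext _ _ _ _ (fun t _ => eq_refl) (fun t _ => Q0) Nul).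
Qed.

Lemma inf_agree {X : TopSpace} (x : X) s s' P P' t :
  (forall i, is_loop x (s i)) -> (forall i, is_loop x (s' i)) ->
  IsInfProd x s P -> IsInfProd x s' P' -> I01 t ->
  (forall k, slotL k < t < slotR k -> s k = s' k) -> P t = P' t.
Proof.
  intros Ls Ls' HP HP' Ht E.
  destruct (classic (exists k, slotL k < t < slotR k)) as [[k T]|N].
  - rewrite (inf_val x s P k t HP), (inf_val x s' P' k t HP') by lra. rewrite E; auto.
  - rewrite (inf_x x s P t), (inf_x x s' P' t); auto; intros k T; apply N; eauto.
Qed.

Lemma slot_bounds k : 0 <= slotL k /\ slotL k < slotR k /\ slotR k <= 1.
Proof. pose proof (slotL_I01 k). pose proof (slotL_lt k). pose proof (slotR_lt1 k). repeat split; lra. Qed.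

Lemma inf_aff' {X : TopSpace} (x : X) s q k u : IsInfProd x s q -> I01 u ->
  q (slotL k + u * (slotR k - slotL k)) = s k u.
Proof. intros. rewrite Rmult_comm. apply (inf_aff x); auto. Qed.

Lemma inf_change1 {X : TopSpace} (x : X) s s' P P' j : null_seq x s -> null_seq x s' ->
  IsInfProd x s P -> IsInfProd x s' P' -> (forall k, k <> j -> s k = s' k) ->
  phtpy (s j) (s' j) -> phtpy P P'.
Proof.
  intros Ns Ns' HP HP' E Hj. destruct (slot_bounds j) as [B1 [B2 B3]].
  apply (local_replace P P' (slotL j) (slotR j)); auto.
  - apply (inf_cont x s P Ns HP).
  - intros t Ht Hout. apply (inf_agree x s s' P P' t (proj1 Ns) (proj1 Ns') HP HP' Ht).
    intros k T. apply E. intros ->. lra.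
  - apply (phtpy_ext (s j) (s' j)); auto; intros u Hu; symmetry; apply (inf_aff' x); auto.
Qed.

Definition mu (m u : R) : R := clamp ((/ m) * u + 0) - clamp ((/ (1 - m)) * u + (- m / (1 - m))).

Lemma mu_facts m : 0 < m < 1 -> cont1 (mu m) /\ into01 (mu m) /\ mu m 0 = 0 /\ mu m 1 = 0.
Proof.
  intros Hm. assert (0 < / m) by (apply Rinv_0_lt_compat; lra).
  assert (0 < / (1 - m)) by (apply Rinv_0_lt_compat; lra).
  split; [|split; [|split]].
  - unfold mu. apply cont1_minus; apply cont1_clamp_lin.
  - intros u Hu. unfold mu. destruct (Rle_dec u m).
    + rewrite (clamp_le0 (/ (1 - m) * u + - m / (1 - m))).
      * rewrite clamp_id. unfold I01 in *; split; [nra|]. apply Rmult_le_reg_l with m; [lra|].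
        field_simplify; lra. unfold I01 in *; split; [nra|]. apply Rmult_le_reg_l with m; [lra|]. field_simplify; lra.
      * apply Rmult_le_reg_l with (1 - m); [lra|]. field_simplify; lra.
    + rewrite (clamp_ge1 (/ m * u + 0)).
      * rewrite clamp_id. unfold I01 in *; split. apply Rmult_le_reg_l with (1 - m); [lra|]. field_simplify; lra.
        apply Rmult_le_reg_l with (1 - m); [lra|]. field_simplify; lra.
        unfold I01 in *; split. apply Rmult_le_reg_l with (1 - m); [lra|]. field_simplify; lra.
        apply Rmult_le_reg_l with (1 - m); [lra|]. field_simplify; lra.
      * apply Rmult_le_reg_l with m; [lra|]. field_simplify; lra.
  - unfold mu. rewrite Rmult_0_r, Rplus_0_l, clamp_le0, clamp_le0; try lra.
    rewrite Rmult_0_r, Rplus_0_l. unfold Rdiv. rewrite <- Ropp_mult_distr_l. nra.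
  - unfold mu. rewrite clamp_ge1, clamp_ge1; [lra| |]. 
    replace (/ (1 - m) * 1 + - m / (1 - m)) with 1 by (field; lra). lra.
    rewrite Rmult_1_r, Rplus_0_r. apply Rmult_le_reg_l with m; [lra|]. field_simplify; lra.
Qed.

Lemma inf_par_eq k t : inf_par k t = (t - slotL k) / (slotR k - slotL k).
Proof.
  unfold inf_par. rewrite slot_len.
  replace (slotL k + / (INR (k + 1) * INR (k + 2)) - slotL k) with (/ (INR (k + 1) * INR (k + 2))) by ring.
  unfold Rdiv. rewrite Rinv_inv. ring.
Qed.

Lemma inf_pair {X : TopSpace} (x : X) s s' P P' i : null_seq x s -> null_seq x s' ->
  IsInfProd x s P -> IsInfProd x s' P' ->
  (forall k, k <> (2 * i)%nat -> k <> (2 * i + 1)%nat -> s k = s' k) ->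
  s (2 * i + 1)%nat = rev (s (2 * i)%nat) -> s' (2 * i)%nat = const_path x -> s' (2 * i + 1)%nat = const_path x ->
  phtpy P P'.
Proof.
  intros Ns Ns' HP HP' E Er E1 E2.
  set (l := slotL (2 * i)). set (w := slotR (2 * i)). set (r := slotR (2 * i + 1)).
  assert (Ew : slotL (2 * i + 1) = w) by (unfold w; rewrite slotR_L; f_equal; lia).
  destruct (slot_bounds (2 * i)) as [B1 [B2 B3]]. destruct (slot_bounds (2 * i + 1)) as [C1 [C2 C3]].
  fold l w in B1, B2, B3. fold r in C2, C3. rewrite Ew in C1, C2.
  set (m := (w - l) / (r - l)).
  assert (Hm : 0 < m < 1).
  { unfold m. split. apply Rdiv_lt_0_compat; lra. apply Rmult_lt_reg_r with (r - l); [lra|].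
    field_simplify; lra. }
  destruct (mu_facts m Hm) as [Mc [Mi [M0 M1]]].
  apply (local_replace P P' l r); auto; try lra.
  - apply (inf_cont x s P Ns HP).
  - intros t Ht Hout. apply (inf_agree x s s' P P' t (proj1 Ns) (proj1 Ns') HP HP' Ht).
    intros k T. apply E; intros ->; [unfold l, w in *|rewrite Ew in T; unfold r in *]; lra.
  - apply phtpy_trans with (fun _ => s (2 * i)%nat 0).
    + apply (phtpy_ext (fun u => s (2 * i)%nat (mu m u)) (fun _ => s (2 * i)%nat 0)); auto.
      * intros u Hu. set (t := l + u * (r - l)).
        destruct (Rle_dec u m).
        -- rewrite (inf_val x s P (2 * i) t HP).
           ++ f_equal. rewrite inf_par_eq. fold l w. unfold mu.
              assert (Q1 : / (1 - m) * u + - m / (1 - m) <= 0).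
              { apply Rmult_le_reg_l with (1 - m); [lra|]. field_simplify; lra. }
              assert (Q2 : I01 (/ m * u + 0)).
              { unfold I01 in *; split; [apply Rplus_le_le_0_compat; [apply Rmult_le_pos; [left; apply Rinv_0_lt_compat; lra|lra]|lra]|].
                apply Rmult_le_reg_l with m; [lra|]. field_simplify; lra. }
              rewrite (clamp_le0 _ Q1), (clamp_id _ Q2).
              unfold t, m. field. lra.
           ++ fold l w. unfold t. unfold I01 in Hu. split. nra.
              assert (u * (r - l) <= m * (r - l)) by (apply Rmult_le_compat_r; lra).
              unfold m in H. replace ((w - l) / (r - l) * (r - l)) with (w - l) in H by (field; lra). lra.
        -- rewrite (inf_val x s P (2 * i + 1) t HP).
           ++ rewrite Er. unfold rev. f_equal. rewrite inf_par_eq. rewrite Ew. fold r. unfold mu.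
              assert (Q1 : 1 <= / m * u + 0).
              { apply Rmult_le_reg_l with m; [lra|]. field_simplify; lra. }
              assert (Q2 : I01 (/ (1 - m) * u + - m / (1 - m))).
              { unfold I01 in *; split. apply Rmult_le_reg_l with (1 - m); [lra|]. field_simplify; lra.
                apply Rmult_le_reg_l with (1 - m); [lra|]. field_simplify; lra. }
              rewrite (clamp_ge1 _ Q1), (clamp_id _ Q2).
              unfold t, m. field. split; lra.
           ++ rewrite Ew. fold r. unfold t. unfold I01 in Hu. split.
              assert (m * (r - l) <= u * (r - l)) by (apply Rmult_le_compat_r; lra).
              unfold m in H. replace ((w - l) / (r - l) * (r - l)) with (w - l) in H by (field; lra). lra.
              nra.
      * apply reparam_null; auto. apply (loop_cont x), (null_loop x s _ Ns).
    + apply (phtpy_ext (fun _ => x) (fun _ => x)).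
      * intros; destruct (null_loop x s (2 * i)%nat Ns) as [_ [A0 _]]; auto.
      * intros u Hu. set (t := l + u * (r - l)).
        assert (Tt : l <= t <= r) by (unfold t; unfold I01 in Hu; split; nra).
        destruct (Rle_dec t w).
        -- rewrite (inf_val x s' P' (2 * i) t HP') by (fold l w; lra). rewrite E1. auto.
        -- rewrite (inf_val x s' P' (2 * i + 1) t HP') by (rewrite Ew; fold r; lra). rewrite E2. auto.
      * apply phtpy_refl. apply (loop_cont x), const_loop.
Qed.

Definition zseq {X : TopSpace} (x : X) (a b : nat -> R -> X) (j : nat) : R -> X :=
  if Nat.even j then a (Nat.div2 j) else rev (b (Nat.div2 j)).
Definition zk {X : TopSpace} (x : X) a b (K : nat) (j : nat) : R -> X :=
  if Nat.ltb j (2 * K) then const_path x else zseq x a b j.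
Definition wk {X : TopSpace} (x : X) a b (K : nat) (j : nat) : R -> X :=
  if Nat.eqb j (2 * K) then b K else zk x a b K j.

Lemma zseq_even {X : TopSpace} (x : X) a b n : zseq x a b (2 * n) = a n.
Proof. unfold zseq. rewrite Nat.even_even, Nat.div2_double. auto. Qed.
Lemma zseq_odd {X : TopSpace} (x : X) a b n : zseq x a b (2 * n + 1) = rev (b n).
Proof. unfold zseq. rewrite Nat.even_odd, Nat.div2_odd'. auto. Qed.

Lemma zseq_tail {X : TopSpace} (x : X) a b (U : X -> Prop) N : (forall n, (N <= n)%nat -> forall t, I01 t -> U (a n t)) ->
  (forall n, (N <= n)%nat -> forall t, I01 t -> U (b n t)) ->
  forall j, (2 * N <= j)%nat -> forall t, I01 t -> U (zseq x a b j t).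
Proof.
  intros Ha Hb j Hj t Ht. destruct (Nat.Even_or_Odd j) as [[n ->]|[n ->]].
  - rewrite zseq_even. apply Ha; auto; lia.
  - rewrite zseq_odd. unfold rev. apply Hb; [lia|unfold I01 in *; lra].
Qed.

Lemma null_zseq {X : TopSpace} (x : X) a b : null_seq x a -> null_seq x b -> null_seq x (zseq x a b).
Proof.
  intros [La Na] [Lb Nb]. split.
  - intros j. unfold zseq. destruct Nat.even; auto using rev_loop.
  - intros U HU Ux. destruct (Na U HU Ux) as [N1 H1]. destruct (Nb U HU Ux) as [N2 H2].
    exists (2 * Nat.max N1 N2)%nat. apply zseq_tail; intros; [apply H1|apply H2]; auto; lia.
Qed.

Lemma null_zk {X : TopSpace} (x : X) a b K : null_seq x a -> null_seq x b -> null_seq x (zk x a b K).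
Proof.
  intros Na Nb. destruct (null_zseq x a b Na Nb) as [Lz Nz]. split.
  - intros j. unfold zk. destruct Nat.ltb; auto using const_loop.
  - intros U HU Ux. destruct (Nz U HU Ux) as [N HN]. exists N. intros j Hj t Ht.
    unfold zk. destruct Nat.ltb; auto.
Qed.

Lemma null_wk {X : TopSpace} (x : X) a b K : null_seq x a -> null_seq x b -> null_seq x (wk x a b K).
Proof.
  intros Na Nb. destruct (null_zk x a b K Na Nb) as [Lz Nz]. split.
  - intros j. unfold wk. destruct Nat.eqb; auto. apply Nb.
  - intros U HU Ux. destruct (Nz U HU Ux) as [N HN]. exists (Nat.max N (S (2 * K))). intros j Hj t Ht.
    unfold wk. destruct (Nat.eqb_spec j (2 * K)); [lia|]. apply HN; auto; lia.
Qed.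

Lemma zk_steps {X : TopSpace} (x : X) a b : null_seq x a -> null_seq x b -> (forall n, phtpy (a n) (b n)) ->
  forall K, phtpy (InfF x (zseq x a b)) (InfF x (zk x a b K)).
Proof.
  intros Na Nb Hab. pose proof (null_zseq x a b Na Nb) as Nz.
  induction K.
  - replace (zk x a b 0) with (zseq x a b).
    + apply phtpy_refl. apply (inf_cont x _ _ Nz), InfF_spec, Nz.
    + apply functional_extensionality; intros j. unfold zk. simpl. auto.
  - pose proof (null_zk x a b K Na Nb) as NK. pose proof (null_zk x a b (S K) Na Nb) as NSK.
    pose proof (null_wk x a b K Na Nb) as NW.
    apply phtpy_trans with (InfF x (zk x a b K)); auto.
    apply phtpy_trans with (InfF x (wk x a b K)).
    + apply (inf_change1 x (zk x a b K) (wk x a b K) _ _ (2 * K) NK NW); try apply InfF_spec; try apply NK; try apply NW.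
      * intros k Hk. unfold wk. destruct (Nat.eqb_spec k (2 * K)); [lia|auto].
      * unfold wk, zk. rewrite Nat.eqb_refl, Nat.ltb_irrefl, zseq_even. auto.
    + apply (inf_pair x (wk x a b K) (zk x a b (S K)) _ _ K NW NSK); try apply InfF_spec; try apply NW; try apply NSK.
      * intros k H1 H2. unfold wk, zk. destruct (Nat.eqb_spec k (2 * K)); [lia|].
        destruct (Nat.ltb_spec k (2 * K)); destruct (Nat.ltb_spec k (2 * S K)); auto; lia.
      * unfold wk, zk. destruct (Nat.eqb_spec (2 * K + 1) (2 * K)); [lia|].
        destruct (Nat.ltb_spec (2 * K + 1) (2 * K)); [lia|]. rewrite zseq_odd, Nat.eqb_refl. auto.
      * unfold zk. destruct (Nat.ltb_spec (2 * K) (2 * S K)); [auto|lia].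
      * unfold zk. destruct (Nat.ltb_spec (2 * K + 1) (2 * S K)); [auto|lia].
Qed.

Lemma inf_open_par k t : slotL k < t < slotR k -> I01 (inf_par k t).
Proof.
  intros T. rewrite inf_par_eq. unfold I01. split.
  - apply Rdiv_le_0_compat; lra.
  - apply Rmult_le_reg_r with (slotR k - slotL k); [lra|]. field_simplify; lra.
Qed.

Lemma step1 {X : TopSpace} (x : X) a b : homotopically_hausdorff x -> null_seq x a -> null_seq x b ->
  (forall n, phtpy (a n) (b n)) -> phtpy (InfF x (zseq x a b)) (const_path x).
Proof.
  intros HH Na Nb Hab. pose proof (null_zseq x a b Na Nb) as Nz.
  apply NNPP; intro Hn.
  destruct (HH (InfF x (zseq x a b)) (inf_loop x _ _ Nz (InfF_spec x _ (proj1 Nz))) Hn) as [U [HU [Ux HUb]]].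
  destruct (proj2 Na U HU Ux) as [N1 H1]. destruct (proj2 Nb U HU Ux) as [N2 H2].
  set (N := Nat.max N1 N2).
  pose proof (null_zk x a b N Na Nb) as NN.
  apply (HUb (InfF x (zk x a b N))).
  - apply (inf_loop x _ _ NN), InfF_spec, NN.
  - intros t Ht. destruct (classic (exists j, slotL j < t < slotR j)) as [[j T]|NT].
    + rewrite (inf_val x (zk x a b N) _ j t (InfF_spec x _ (proj1 NN))) by lra.
      pose proof (inf_open_par j t T) as Ip. unfold zk. destruct (Nat.ltb_spec j (2 * N)); [auto|].
      apply (zseq_tail x a b U N); auto; intros; [apply H1|apply H2]; auto; unfold N in *; lia.
    + rewrite (inf_x x (zk x a b N) _ t (proj1 NN) (InfF_spec x _ (proj1 NN)) Ht); auto.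
      intros j T; apply NT; eauto.
  - apply phtpy_sym, zk_steps; auto.
Qed.

Definition sA (k : nat) : nat := idx (S (Nat.div2 k)) (2 ^ Nat.div2 k - 1 + (if Nat.even k then 0 else 1)).

Lemma sA_even n : sA (2 * n) = idx (S n) (2 ^ n - 1).
Proof. unfold sA. rewrite Nat.even_even, Nat.div2_double. f_equal. lia. Qed.
Lemma sA_odd n : sA (2 * n + 1) = idx (S n) (2 ^ n).
Proof. unfold sA. rewrite Nat.even_odd, Nat.div2_odd'. f_equal. pose proof (pow2_pos n). lia. Qed.

Lemma sA_valid k : (2 ^ Nat.div2 k - 1 + (if Nat.even k then 0 else 1) < 2 ^ S (Nat.div2 k))%nat.
Proof. pose proof (pow2_pos (Nat.div2 k)). simpl. destruct Nat.even; lia. Qed.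

Lemma sA_inj k k' : sA k = sA k' -> k = k'.
Proof.
  unfold sA. intros E. apply idx_inj in E; try apply sA_valid. destruct E as [E1 E2].
  injection E1 as E1. rewrite E1 in E2.
  pose proof (Nat.div2_odd k). pose proof (Nat.div2_odd k').
  rewrite <- !Nat.negb_even in H, H0. rewrite E1 in H.
  destruct (Nat.even k), (Nat.even k'); simpl in *; lia.
Qed.

Lemma sA_inv n k : (k < 2 ^ S n)%nat -> forall k0, sA k0 = idx (S n) k ->
  k = (2 ^ n - 1)%nat \/ k = (2 ^ n)%nat.
Proof.
  intros Hk k0 E. unfold sA in E. apply idx_inj in E; [|apply sA_valid|auto].
  destruct E as [E1 E2]. injection E1 as E1. subst n. destruct Nat.even; [left|right]; pose proof (pow2_pos (Nat.div2 k0)); lia.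
Qed.

Lemma notA_inf n : exists m, (n <= m)%nat /\ ~ (exists k, sA k = m).
Proof.
  exists (idx (S (S n)) 0). split. pose proof (idx_ge (S (S n)) 0). lia.
  intros [k E]. destruct (sA_inv (S n) 0 ltac:(pose proof (pow2_pos (S (S n))); lia) k E) as [H|H];
    simpl in H; pose proof (pow2_pos n); lia.
Qed.

Lemma step2 {X : TopSpace} (x : X) a b : transf_pi1_comm x -> null_seq x a -> null_seq x b ->
  phtpy (InfF x (zseq x a b)) (const_path x) -> phtpy (InfF x a) (InfF x b).
Proof.
  intros TC Na Nb Hz. pose proof (null_zseq x a b Na Nb) as Nz. pose proof (null_Rseq x _ Nz) as NRz.
  destruct (bij_ext (fun i => exists k, sA k = i) (fun i => exists k, rr k = i) sA rr)
    as [phi [Bp [Pa Pb]]].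
  { apply sA_inj. } { apply rr_inj. } { tauto. } { tauto. } { apply notA_inf. } { apply notR_inf. }
  set (N := fun i => Rseq x (zseq x a b) (phi i)).
  assert (NN : null_seq x N) by (apply (null_comp x _ phi NRz (proj1 Bp))).
  assert (NotA : forall i, ~ (exists k, sA k = i) -> N i = const_path x).
  { intros i Hi. unfold N. pose proof (Pb i Hi) as Hr.
    destruct (idx_surj (phi i)) as [m [k [Hk E]]]. rewrite E.
    apply Rseq_nR; auto. intros ->. apply Hr. exists m. rewrite E. auto. }
  assert (Nlam : forall i, N (lam i) = Rseq x a i).
  { intros i. destruct (idx_surj i) as [n [k [Hk ->]]]. rewrite lam_idx by auto.
    destruct (Nat.eq_dec k (2 ^ n - 1)) as [->|Ne].
    - rewrite <- sA_even. unfold N. rewrite Pa. unfold rr. rewrite !Rseq_R, zseq_even. auto.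
    - rewrite NotA, Rseq_nR; auto. intros [k0 E]. destruct (sA_inv n k ltac:(simpl; lia) k0 E); lia. }
  assert (Nrho : forall i, N (rho i) = Lseq x b i).
  { intros i. destruct (idx_surj i) as [n [k [Hk ->]]]. rewrite rho_idx by auto.
    destruct (Nat.eq_dec k 0) as [->|Ne].
    - rewrite Nat.add_0_l, <- sA_odd. unfold N. rewrite Pa. unfold rr. rewrite Rseq_R, zseq_odd, Lseq_L. auto.
    - rewrite NotA, Lseq_nL; auto. intros [k0 E].
      destruct (sA_inv n (k + 2 ^ n) ltac:(simpl; lia) k0 E); pose proof (pow2_pos n); lia. }
  assert (N0 : N O = const_path x).
  { apply NotA. intros [k E]. unfold sA in E. change O with (idx 0 0) in E.
    apply idx_inj in E; [|apply sA_valid|simpl; lia]. destruct E; discriminate. }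
  set (PN := TauF x N).
  assert (HPN : IsTauProd x N PN) by (apply TauF_spec, NN).
  assert (Kh : phtpy PN (const_path x)).
  { apply phtpy_trans with (TauF x (Rseq x (zseq x a b))).
    { apply phtpy_sym. apply (TC _ phi NRz Bp); auto. apply TauF_spec, NRz. }
    apply phtpy_trans with (InfF x (zseq x a b)); auto.
    destruct h1_facts as [C [I [E0 E1]]].
    apply (reparam_ext _ _ h1); auto. apply (inf_cont x _ _ Nz), InfF_spec, Nz.
    intros t Ht. apply (Rrel x (zseq x a b)); auto. apply TauF_spec, NRz. apply InfF_spec, Nz. }
  assert (IA : IsInfProd x a (InfF x a)) by (apply InfF_spec, Na).
  assert (IB : IsInfProd x b (InfF x b)) by (apply InfF_spec, Nb).
  assert (Left : forall t, I01 t -> PN (t / 3) = InfF x a (h1 t)).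
  { intros t Ht. apply (Rrel x a (fun t => PN (t / 3))); auto.
    apply (tau_seq_ext x (fun i => N (lam i))); auto. apply tau_left; auto. }
  assert (Right : forall t, I01 t -> PN (2/3 + t / 3) = InfF x b (h1 (1 - t))).
  { intros t Ht. apply (Lrel x b (fun t => PN (2/3 + t / 3))); auto.
    apply (tau_seq_ext x (fun i => N (rho i))); auto. apply tau_right; auto. }
  assert (Mid : forall t, I01 t -> PN (1/3 + t / 3) = x).
  { intros t Ht. rewrite (tau_mid x N PN t HPN Ht), N0. auto. }
  assert (PN0 : PN 0 = x) by (apply (tau_0 x _ _ HPN)).
  assert (PN1 : PN 1 = x) by (apply (tau_1 x _ _ HPN)).
  assert (IA0 : InfF x a 1 = x) by (apply IA).
  assert (IB0 : InfF x b 0 = x) by (apply (inf_loop x _ _ Nb IB)).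
  destruct h1_facts as [C1 [I1 [E10 E11]]].
  destruct Kh as [H [Hc [H0 [H1 He]]]].
  set (s1 := fun t => clamp (4 * t + 0) - clamp (4 * t + -2)).
  set (t1 := fun t => clamp (4 * t + -1) + (-1/3) * clamp (4 * t + -3)).
  assert (Sq : phtpy (fun t => H ((fun _ => 0) t) (2/3 * t + 0)) (fun t => H (s1 t) (t1 t))).
  { apply (square_lemma H); auto using cont1_const, cont1_lin.
    - unfold s1. apply cont1_minus; apply cont1_clamp_lin.
    - unfold t1. apply cont1_plus. apply cont1_clamp_lin. apply cont1_scal, cont1_clamp_lin.
    - intros t _; unfold I01; lra.
    - intros t Ht; unfold I01 in *; lra.
    - intros t Ht; unfold s1; unfold I01 in *; clampall.
    - intros t Ht; unfold t1; unfold I01 in *; clampall.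
    - unfold s1; clampall.
    - unfold t1; clampall.
    - unfold s1; clampall.
    - unfold t1; clampall. }
  set (g0 := fun t => h1 (clamp (2 * t + 0))).
  set (g1 := fun t => h1 (clamp (4 * t + -3))).
  assert (G0 : cont1 g0 /\ into01 g0 /\ g0 0 = 0 /\ g0 1 = 1).
  { unfold g0. split; [|split; [|split]].
    - apply cont1_comp; auto using cont1_clamp_lin. intros t _; apply clamp_I01.
    - intros t _; apply I1, clamp_I01.
    - rewrite clamp_le0 by lra; auto.
    - rewrite clamp_ge1 by lra; auto. }
  assert (G1 : cont1 g1 /\ into01 g1 /\ g1 0 = 0 /\ g1 1 = 1).
  { unfold g1. split; [|split; [|split]].
    - apply cont1_comp; auto using cont1_clamp_lin. intros t _; apply clamp_I01.
    - intros t _; apply I1, clamp_I01.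
    - rewrite clamp_le0 by lra; auto.
    - rewrite clamp_ge1 by lra; auto. }
  assert (V0 : forall t, I01 t -> H ((fun _ => 0) t) (2/3 * t + 0) = InfF x a (g0 t)).
  { intros t Ht. cbv beta. rewrite H0 by (unfold I01 in *; lra). unfold g0. unfold I01 in Ht.
    destruct (Rle_dec t (1/2)).
    - rewrite clamp_id by (unfold I01; lra). rewrite <- Left by (unfold I01; lra). f_equal; field.
    - rewrite clamp_ge1 by lra. rewrite E11, IA0.
      replace (2/3 * t + 0) with (1/3 + (2 * t - 1) / 3) by field. apply Mid. unfold I01; lra. }
  assert (V1 : forall t, I01 t -> H (s1 t) (t1 t) = InfF x b (g1 t)).
  { intros t Ht. unfold g1. unfold I01 in Ht.
    destruct (Rle_dec t (1/4)).
    { replace (t1 t) with 0 by (unfold t1; clampall). replace (clamp (4 * t + -3)) with 0 by clampall.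
      rewrite E10, IB0. rewrite (proj1 (He (s1 t) ltac:(unfold s1, I01; clampall))). auto. }
    destruct (Rle_dec t (1/2)).
    { replace (s1 t) with 1 by (unfold s1; clampall). replace (clamp (4 * t + -3)) with 0 by clampall.
      rewrite E10, IB0. apply H1. unfold t1, I01; clampall. }
    destruct (Rle_dec t (3/4)).
    { replace (t1 t) with 1 by (unfold t1; clampall). replace (clamp (4 * t + -3)) with 0 by clampall.
      rewrite E10, IB0. rewrite (proj2 (He (s1 t) ltac:(unfold s1, I01; clampall))). auto. }
    { replace (s1 t) with 0 by (unfold s1; clampall).
      replace (clamp (4 * t + -3)) with (1 - (1 - (4 * t - 3))) by clampall.
      rewrite H0 by (unfold t1, I01; clampall).
      replace (t1 t) with (2/3 + (1 - (4 * t - 3)) / 3) by (unfold t1; clampall).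
      apply Right. unfold I01; lra. } }
  destruct G0 as [Cg0 [Ig0 [g00 g01]]]. destruct G1 as [Cg1 [Ig1 [g10 g11]]].
  apply phtpy_trans with (fun t => InfF x a (g0 t)).
  { apply phtpy_sym, reparam; auto. apply (inf_cont x _ _ Na IA). }
  apply phtpy_trans with (fun t => H ((fun _ => 0) t) (2/3 * t + 0)).
  { apply phtpy_sym. apply (phtpy_ext (fun t => H 0 (2/3 * t + 0)) (fun t => H 0 (2/3 * t + 0))).
    { intros; reflexivity. } { exact V0. } apply phtpy_refl.
    apply (cont01_comp (fun u => H 0 u) (fun t => 2/3 * t + 0)); auto using cont1_lin.
    - intros U HU t Ht HUt. destruct (Hc U HU 0 t I01_0 Ht HUt) as [e [He' HH]].
      exists e; split; auto. intros; apply HH; auto. rewrite Rminus_diag, Rabs_R0; lra.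
    - intros t Ht; unfold I01 in *; lra. }
  apply phtpy_trans with (fun t => H (s1 t) (t1 t)); auto.
  apply phtpy_trans with (fun t => InfF x b (g1 t)).
  { apply (phtpy_ext (fun t => InfF x b (g1 t)) (fun t => InfF x b (g1 t))).
    - intros; symmetry; auto.
    - auto.
    - apply phtpy_refl. apply (cont01_comp (InfF x b) g1); auto. apply (inf_cont x _ _ Nb IB). }
  apply reparam; auto. apply (inf_cont x _ _ Nb IB).
Qed.

Lemma claim4 {X : TopSpace} (x : X) : transf_pi1_comm x -> homotopically_hausdorff x -> wd_inf_products x.
Proof.
  intros TC HH a b Na Nb Hab p q Hp Hq.
  pose proof (step2 x a b TC Na Nb (step1 x a b HH Na Nb Hab)) as S.
  apply (phtpy_ext (InfF x a) (InfF x b)); auto.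
  - intros t Ht. apply (inf_unique x a _ _ (proj1 Na)); auto. apply InfF_spec, Na.
  - intros t Ht. apply (inf_unique x b _ _ (proj1 Nb)); auto. apply InfF_spec, Nb.
Qed.

Theorem mainTheorem7 (X : TopSpace) (x : X) :
  transf_pi1_comm x ->
  (wd_inf_products x <-> wd_transf_products x) /\
  (first_countable_at x ->
     (wd_inf_products x <-> homotopically_hausdorff x) /\
     (wd_transf_products x <-> homotopically_hausdorff x)).
Proof.
  intros TC. split.
  - split; [apply claim2; auto|apply claim1].
  - intros FC. split; split.
    + intros W. apply claim3; auto. apply claim2; auto.
    + apply claim4; auto.
    + apply claim3; auto.
    + intros HH. apply claim2; auto. apply claim4; auto.
Qed.
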